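(* Let $X=\varprojlim X_np_n$ be a reduced regular projective limit of Fréchet lattices $X_n$, endowed with the projective limit topology, let $X_0\subset X$ be a vector subspace, $q_1\colon X_1\to\mathbb R$ a positive linear functional, $q:=q_1\circ\operatorname{pr}_1$, and $H\subset X$ a sequentially closed convex cone containing a vector $h\le0$. Suppose that for each $n\in\mathbb N$ one of the following holds: (i) $H_n:=\operatorname{pr}_nH$ is minorizing for $\operatorname{pr}_nX_0$; (ii) the sup-projection $f_n(x_n)=\sup\{\mathrm{spf}_{H,q}(x):\ x\in X,\ \operatorname{pr}_nx=x_n\}$ is upper semicontinuous on $\operatorname{pr}_nX_0$ (with the topology induced from $X_n$); and moreover (iii) for every at most countable subset $B\subset H$ which is bounded above in $X$ and satisfies $\inf q(B)>-\infty$ there is $n_q\in\mathbb N$ such that $\operatorname{pr}_nB$ is sequentially precompact in $X_n$ for every $n\ge n_q$. Then $\mathrm{spf}_{H,q}$ is a positive superlinear function with values in $\mathbb R\cup\{-\infty\}$ and for all $x\in X_0$ $$\mathrm{spf}_{H,q}(x)=\inf\{l(x):\ l\colon X_0\to\mathbb R\ \text{positive linear},\ q(h)\le l(x')\ \text{for all }h\in H,\ x'\in X_0,\ h\le x'\}.$$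
   Context: All vector spaces are real. Projective limit: for ordered vector spaces $(X_n,\le_n)$ and positive linear $p_n\colon X_{n+1}\to X_n$, $X=\varprojlim X_np_n=\{x=(x_n)\in\prod X_n:\ x_n=p_n(x_{n+1})\ \forall n\}$ with coordinatewise order, $\operatorname{pr}_nx=x_n$; regular if all $X_n$ are vector lattices and each $p_n$ preserves suprema of finite sets; reduced if $\operatorname{pr}_nX=X_n$ for all $n$. A Fréchet lattice is a vector lattice which is a Fréchet space having a base of zero neighbourhoods $V$ such that $x\in V$, $|x'|\le|x|$ imply $x'\in V$ ($|x|=\sup\{x,-x\}$). The projective limit topology on $X$ is the one induced from the product topology of $\prod_nX_n$. A set is sequentially closed if it contains limits of its convergent sequences; sequentially precompact if every sequence in it has a convergent subsequence. Minorizing: every $y\in\operatorname{pr}_nX_0$ has $h\in H_n$ with $h\le_ny$. Supremal function: $\mathrm{spf}_{H,q}(x)=\sup\{q(h):\ h\in H,\ h\le x\}$, $\sup\varnothing=-\infty$. Superlinear: superadditive, $g(tx)=tg(x)$ for $t>0$, $g(0)$ finite; positive: $g(x)\ge0$ for $x\ge0$. *)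

(* Defs.v *)
From Stdlib Require Import Reals Lra ClassicalEpsilon.
Open Scope R_scope.

Inductive ER : Type := Fin (r : R) | PInf | MInf.

Definition Ele (a b : ER) : Prop :=
  match a, b with
  | MInf, _ => True
  | _, PInf => True
  | Fin x, Fin y => x <= y
  | _, _ => False
  end.

Definition Elt (a b : ER) : Prop := Ele a b /\ a <> b.

(* addition, used only where +oo does not occur; -oo is absorbing *)
Definition Eadd (a b : ER) : ER :=
  match a, b with
  | Fin x, Fin y => Fin (x + y)
  | MInf, _ | _, MInf => MInf
  | _, _ => PInf
  end.

(* multiplication by a real scalar t > 0 *)
Definition Escal (t : R) (a : ER) : ER :=
  match a with
  | Fin x => Fin (t * x)
  | PInf => PInf
  | MInf => MInf
  end.

Definition is_Esup (S : ER -> Prop) (s : ER) : Prop :=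
  (forall a, S a -> Ele a s) /\ (forall b, (forall a, S a -> Ele a b) -> Ele s b).
Definition is_Einf (S : ER -> Prop) (s : ER) : Prop :=
  (forall a, S a -> Ele s a) /\ (forall b, (forall a, S a -> Ele b a) -> Ele b s).

(* supremum / infimum in the complete lattice ER (sup of empty set = -oo) *)
Definition Esup (S : ER -> Prop) : ER := epsilon (inhabits MInf) (is_Esup S).
Definition Einf (S : ER -> Prop) : ER := epsilon (inhabits PInf) (is_Einf S).

Record VLat : Type := {
  vcar :> Type;
  vzero : vcar;
  vadd : vcar -> vcar -> vcar;
  vopp : vcar -> vcar;
  vscal : R -> vcar -> vcar;
  vle : vcar -> vcar -> Prop;
  vjoin : vcar -> vcar -> vcar;
  vaddA : forall x y z, vadd x (vadd y z) = vadd (vadd x y) z;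
  vaddC : forall x y, vadd x y = vadd y x;
  vadd0 : forall x, vadd x vzero = x;
  vaddN : forall x, vadd x (vopp x) = vzero;
  vscal1 : forall x, vscal 1 x = x;
  vscalA : forall a b x, vscal a (vscal b x) = vscal (a * b) x;
  vscalDr : forall a x y, vscal a (vadd x y) = vadd (vscal a x) (vscal a y);
  vscalDl : forall a b x, vscal (a + b) x = vadd (vscal a x) (vscal b x);
  vle_refl : forall x, vle x x;
  vle_antisym : forall x y, vle x y -> vle y x -> x = y;
  vle_trans : forall x y z, vle x y -> vle y z -> vle x z;
  vle_add : forall x y z, vle x y -> vle (vadd x z) (vadd y z);
  vle_scal : forall t x y, 0 <= t -> vle x y -> vle (vscal t x) (vscal t y);
  vjoin_l : forall x y, vle x (vjoin x y);
  vjoin_r : forall x y, vle y (vjoin x y);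
  vjoin_lub : forall x y z, vle x z -> vle y z -> vle (vjoin x y) z
}.

Arguments vzero {v}.
Arguments vadd {v}.
Arguments vopp {v}.
Arguments vscal {v}.
Arguments vle {v}.
Arguments vjoin {v}.

Definition vsub {V : VLat} (x y : V) : V := vadd x (vopp y).
Definition vabs {V : VLat} (x : V) : V := vjoin x (vopp x).

(* Frechet lattices: a vector lattice with a Hausdorff, complete,      *)
(* metrizable locally convex topology having a base of solid zero     *)
(* neighbourhoods; equivalently the topology is generated by a        *)
(* countable separating family of Riesz (lattice) seminorms sn j and  *)
(* is complete.                                                       *)
Record FLat : Type := {
  flat :> VLat;
  sn : nat -> flat -> R;
  sn_triangle : forall j x y, sn j (vadd x y) <= sn j x + sn j y;
  sn_homog : forall j t x, sn j (vscal t x) = Rabs t * sn j x;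
  sn_solid : forall j x y, vle (vabs x) (vabs y) -> sn j x <= sn j y;
  sn_sep : forall x, (forall j, sn j x = 0) -> x = vzero;
  sn_complete : forall u : nat -> flat,
    (forall j eps, 0 < eps -> exists N, forall m k, (N <= m)%nat -> (N <= k)%nat ->
        sn j (vsub (u m) (u k)) < eps) ->
    exists x, forall j eps, 0 < eps -> exists N, forall k, (N <= k)%nat ->
        sn j (vsub (u k) x) < eps
}.

Arguments sn {f}.

Definition fconv {V : FLat} (u : nat -> V) (x : V) : Prop :=
  forall j eps, 0 < eps -> exists N, forall k, (N <= k)%nat -> sn j (vsub (u k) x) < eps.

Definition in_nbhd {V : FLat} (j : nat) (eps : R) (y z : V) : Prop :=
  forall i, (i <= j)%nat -> sn i (vsub z y) < eps.

Definition usc_on {V : FLat} (A : V -> Prop) (f : V -> ER) : Prop :=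
  forall y, A y -> forall t : R, Elt (f y) (Fin t) ->
    exists j eps, 0 < eps /\ forall z, A z -> in_nbhd j eps y z -> Elt (f z) (Fin t).

Definition seq_precompact {V : FLat} (A : V -> Prop) : Prop :=
  forall u : nat -> V, (forall k, A (u k)) ->
    exists (phi : nat -> nat) (x : V),
      (forall k, (phi k < phi (S k))%nat) /\ fconv (fun k => u (phi k)) x.

Definition linear_map {V W : VLat} (f : V -> W) : Prop :=
  (forall x y, f (vadd x y) = vadd (f x) (f y)) /\
  (forall t x, f (vscal t x) = vscal t (f x)).

Definition positive_map {V W : VLat} (f : V -> W) : Prop :=
  forall x, vle vzero x -> vle vzero (f x).

(* Projective limits (indices start at 0: X 0, X 1, ...)              *)
Definition Prod (X : nat -> FLat) : Type := forall n, X n.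

Section Proj.
Variable X : nat -> FLat.
Variable p : forall n, X (S n) -> X n.

Definition in_lim (x : Prod X) : Prop := forall n, x n = p n (x (S n)).

Definition pzero : Prod X := fun n => vzero.
Definition padd (x y : Prod X) : Prod X := fun n => vadd (x n) (y n).
Definition pscal (t : R) (x : Prod X) : Prod X := fun n => vscal t (x n).
Definition ple (x y : Prod X) : Prop := forall n, vle (x n) (y n).

(* convergence in the product (= projective limit) topology *)
Definition pconv (u : nat -> Prod X) (x : Prod X) : Prop :=
  forall n, fconv (fun k => u k n) (x n).

Definition regular_lim : Prop :=
  forall n (x y : X (S n)), p n (vjoin x y) = vjoin (p n x) (p n y).

Definition reduced_lim : Prop :=
  forall n (y : X n), exists x, in_lim x /\ x n = y.

Definition subspace (A : Prod X -> Prop) : Prop :=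
  (forall x, A x -> in_lim x) /\ A pzero /\
  (forall x y, A x -> A y -> A (padd x y)) /\
  (forall t x, A x -> A (pscal t x)).

Definition convex_cone (A : Prod X -> Prop) : Prop :=
  (forall x, A x -> in_lim x) /\
  (forall t x, 0 < t -> A x -> A (pscal t x)) /\
  (forall t x y, 0 <= t <= 1 -> A x -> A y -> A (padd (pscal t x) (pscal (1 - t) y))).

Definition seq_closed (A : Prod X -> Prop) : Prop :=
  forall (u : nat -> Prod X) x, (forall k, A (u k)) -> in_lim x -> pconv u x -> A x.

Definition proj (n : nat) (A : Prod X -> Prop) : X n -> Prop :=
  fun y => exists x, A x /\ x n = y.

Definition minorizing (n : nat) (H X0 : Prod X -> Prop) : Prop :=
  forall y, proj n X0 y -> exists h, proj n H h /\ vle h y.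

Definition spf (H : Prod X -> Prop) (q : Prod X -> R) (x : Prod X) : ER :=
  Esup (fun a => exists h, H h /\ ple h x /\ a = Fin (q h)).

Definition sup_proj (H : Prod X -> Prop) (q : Prod X -> R) (n : nat) (y : X n) : ER :=
  Esup (fun a => exists x, in_lim x /\ x n = y /\ a = spf H q x).

Definition at_most_countable (B : Prod X -> Prop) : Prop :=
  exists g : nat -> Prod X, forall b, B b -> exists k, g k = b.

Definition superlinear_pos (g : Prod X -> ER) : Prop :=
  (forall x, in_lim x -> g x <> PInf) /\
  (forall x y, in_lim x -> in_lim y -> Ele (Eadd (g x) (g y)) (g (padd x y))) /\
  (forall t x, 0 < t -> in_lim x -> g (pscal t x) = Escal t (g x)) /\
  (exists r, g pzero = Fin r) /\
  (forall x, in_lim x -> ple pzero x -> Ele (Fin 0) (g x)).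

End Proj.

(* Main.v *)
Require Import Defs.
From mathcomp Require classical_sets boolp.
From Stdlib Require Import Reals Lra Lia Classical ClassicalEpsilon FunctionalExtensionality PropExtensionality.
Open Scope R_scope.

Lemma abT (P:Prop) : P -> boolp.asbool P = true.
Proof. exact (proj1 (Bool.reflect_iff _ _ (boolp.asboolP P))). Qed.
Lemma abE (P:Prop) : boolp.asbool P = true -> P.
Proof. exact (proj2 (Bool.reflect_iff _ _ (boolp.asboolP P))). Qed.
Lemma myZorn (T:Type) (t0:T) (R: T -> T -> Prop) :
  (forall t, R t t) -> (forall r s t, R r s -> R s t -> R r t) ->
  (forall A : T -> Prop, (forall s t, A s -> A t -> R s t \/ R t s) -> exists t, forall s, A s -> R s t) ->
  exists t, forall s, R t s -> R s t.
Proof.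
intros Hr Ht Hc.
assert (H1: forall t, boolp.asbool (R t t) = true) by (intro t; apply abT; auto).
assert (H2: forall a b c, boolp.asbool (R a b) = true -> boolp.asbool (R b c) = true -> boolp.asbool (R a c) = true).
{ intros a b c E1 E2. apply abT. apply abE in E1. apply abE in E2. eauto. }
assert (H3: forall A : classical_sets.set T,
 classical_sets.total_on A (fun x x0 : T => boolp.asbool (R x x0) = true) ->
 exists t : T, forall s : T, A s -> boolp.asbool (R s t) = true).
{ intros A HA. destruct (Hc A) as [t1 Hts].
  + intros s2 t2 Hs Htt. destruct (HA s2 t2 Hs Htt) as [H|H]; [left|right]; apply abE; exact H.
  + exists t1. intros s Hs. apply abT. auto. }
destruct (@classical_sets.ZL_preorder T t0 (fun s t => boolp.asbool (R s t)) H1 H2 H3) as [m Hm].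
exists m. intros s Hs. apply abE. apply Hm. apply abT. exact Hs.
Qed.

Lemma Ele_refl a : Ele a a.
Proof. destruct a; simpl; auto; lra. Qed.
Lemma Ele_trans a b c : Ele a b -> Ele b c -> Ele a c.
Proof. destruct a, b, c; simpl; auto; try lra; tauto. Qed.
Lemma Ele_antisym a b : Ele a b -> Ele b a -> a = b.
Proof. destruct a, b; simpl; try tauto; intros; f_equal; lra. Qed.
Lemma Ele_total a b : Ele a b \/ Ele b a.
Proof. destruct a, b; simpl; auto. lra. Qed.
Lemma Ele_notlt a b : ~ Elt a b -> Ele b a.
Proof. intros H. destruct (Ele_total a b) as [h|h]; auto.
  destruct (classic (a = b)) as [e|e]. subst; apply Ele_refl. exfalso; apply H; split; auto. Qed.
Lemma Elt_fin a r : Elt a (Fin r) -> Ele a (Fin r).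
Proof. intros [h _]; exact h. Qed.

Lemma is_Esup_ex (S : ER -> Prop) : exists s, is_Esup S s.
Proof.
destruct (classic (S PInf)) as [HP|HP].
{ exists PInf. split. intros a _; destruct a; simpl; auto.
  intros b Hb. apply Hb; auto. }
set (A := fun r => S (Fin r)).
destruct (classic (exists r, A r)) as [Hne|Hne].
- destruct (classic (bound A)) as [Hb|Hb].
  + destruct (completeness A Hb Hne) as [m [Hm1 Hm2]]. unfold is_upper_bound in Hm1.
    exists (Fin m). split.
    * intros a Ha. destruct a; simpl. apply Hm1; exact Ha. contradiction. auto.
    * intros b Hb2. destruct b; simpl; auto.
      -- apply Hm2. intros x Hx. specialize (Hb2 _ Hx). simpl in Hb2. exact Hb2.
      -- destruct Hne as [r Hr]. specialize (Hb2 _ Hr). simpl in Hb2. exact Hb2.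
  + exists PInf. split. intros a _; destruct a; simpl; auto.
    intros b Hb2. destruct b; simpl; auto.
    * exfalso. apply Hb. exists r. intros x Hx. specialize (Hb2 _ Hx). simpl in Hb2. exact Hb2.
    * destruct Hne as [r Hr]. specialize (Hb2 _ Hr). simpl in Hb2. exact Hb2.
- exists MInf. split.
  + intros a Ha. destruct a; simpl. apply Hne. exists r; exact Ha. contradiction. auto.
  + intros b _. simpl; auto.
Qed.

Lemma Esup_spec S : is_Esup S (Esup S).
Proof. unfold Esup. apply epsilon_spec. apply is_Esup_ex. Qed.
Lemma Esup_ub S a : S a -> Ele a (Esup S).
Proof. intros H. apply (proj1 (Esup_spec S)); auto. Qed.
Lemma Esup_lub S b : (forall a, S a -> Ele a b) -> Ele (Esup S) b.
Proof. intros H. apply (proj2 (Esup_spec S)); auto. Qed.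

Lemma is_Einf_ex (S : ER -> Prop) : exists s, is_Einf S s.
Proof.
destruct (is_Esup_ex (fun b => forall a, S a -> Ele b a)) as [s [H1 H2]].
exists s. split.
- intros a Ha. apply H2. intros b Hb. apply Hb; auto.
- intros b Hb. apply H1. exact Hb.
Qed.
Lemma Einf_spec S : is_Einf S (Einf S).
Proof. unfold Einf. apply epsilon_spec. apply is_Einf_ex. Qed.
Lemma Einf_lb S a : S a -> Ele (Einf S) a.
Proof. intros H. apply (proj1 (Einf_spec S)); auto. Qed.
Lemma Einf_glb S b : (forall a, S a -> Ele b a) -> Ele b (Einf S).
Proof. intros H. apply (proj2 (Einf_spec S)); auto. Qed.

Definition Rsup (A : R -> Prop) : ER := Esup (fun e => exists a, A a /\ e = Fin a).
Lemma Rsup_ub A a : A a -> Ele (Fin a) (Rsup A).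
Proof. intros H. apply Esup_ub. exists a; auto. Qed.
Lemma Rsup_lub A b : (forall a, A a -> Ele (Fin a) b) -> Ele (Rsup A) b.
Proof. intros H. apply Esup_lub. intros e [a [Ha ->]]. auto. Qed.
Lemma Rsup_le A c : (forall a, A a -> a <= c) -> Ele (Rsup A) (Fin c).
Proof. intros H. apply Rsup_lub. intros a Ha. simpl. auto. Qed.
Lemma Rsup_notP A c : (forall a, A a -> a <= c) -> Rsup A <> PInf.
Proof. intros H E. pose proof (Rsup_le A c H) as H0. rewrite E in H0. simpl in H0. exact H0. Qed.
Lemma Rsup_lt A r : Elt (Rsup A) (Fin r) -> exists t, t < r /\ forall a, A a -> a <= t.
Proof.
intros [H1 H2]. destruct (Rsup A) eqn:E; simpl in H1.
- exists r0. split. assert (r0 <> r) by (intro; subst; auto). lra.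
  intros a Ha. pose proof (Rsup_ub A a Ha) as H0. rewrite E in H0. simpl in H0. exact H0.
- contradiction.
- exists (r - 1). split. lra. intros a Ha. pose proof (Rsup_ub A a Ha) as H0. rewrite E in H0. simpl in H0. contradiction.
Qed.
Lemma Rsup_ge A r : (forall t, t < r -> exists a, A a /\ t <= a) -> Ele (Fin r) (Rsup A).
Proof.
intros H. apply Ele_notlt. intros Hlt. destruct (Rsup_lt A r Hlt) as [t [Ht1 Ht2]].
destruct (H ((t + r)/2)) as [a [Ha1 Ha2]]. lra. specialize (Ht2 a Ha1). lra.
Qed.

Lemma Rsup_approx A s : Rsup A = Fin s -> forall eps, 0 < eps -> exists a, A a /\ s - eps < a.
Proof. intros E eps He. apply NNPP. intros Hn.
  assert (Ele (Rsup A) (Fin (s - eps))). { apply Rsup_le. intros a Ha. apply Rnot_lt_le. intros Hl. apply Hn. exists a; auto. }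
  rewrite E in H. simpl in H. lra. Qed.

Lemma Rsup_notM A a : A a -> Rsup A <> MInf.
Proof. intros Ha E. pose proof (Rsup_ub A a Ha). rewrite E in H. simpl in H. exact H. Qed.

Lemma Rsup_fin A c : (exists a, A a) -> (forall a, A a -> a <= c) ->
  exists s, Rsup A = Fin s /\ (forall a, A a -> a <= s) /\ s <= c.
Proof. intros [a0 Ha0] Hc. destruct (Rsup A) eqn:E.
- exists r. split; auto. split. intros a Ha. pose proof (Rsup_ub A a Ha). rewrite E in H. exact H.
  pose proof (Rsup_le A c Hc). rewrite E in H. exact H.
- exfalso. apply (Rsup_notP A c Hc E).
- exfalso. apply (Rsup_notM A a0 Ha0 E). Qed.

Lemma Rsup_add (A B C : R -> Prop) cA cB : (forall a, A a -> a <= cA) -> (forall b, B b -> b <= cB) ->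
  (forall a b, A a -> B b -> exists c, C c /\ a + b <= c) -> Ele (Eadd (Rsup A) (Rsup B)) (Rsup C).
Proof.
intros HA HB HC. destruct (Rsup A) eqn:EA.
- destruct (Rsup B) eqn:EB.
  + simpl. apply Rsup_ge. intros t Ht.
    destruct (Rsup_approx A r EA ((r + r0 - t)/2)) as [a [Ha1 Ha2]]. lra.
    destruct (Rsup_approx B r0 EB ((r + r0 - t)/2)) as [b [Hb1 Hb2]]. lra.
    destruct (HC a b Ha1 Hb1) as [c [Hc1 Hc2]]. exists c. split; auto. lra.
  + exfalso. apply (Rsup_notP B cB HB EB).
  + simpl. auto.
- exfalso. apply (Rsup_notP A cA HA EA).
- simpl. auto.
Qed.

Lemma Escal_mono t a b : 0 < t -> Ele a b -> Ele (Escal t a) (Escal t b).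
Proof. intros Ht. destruct a, b; simpl; auto. intros; apply Rmult_le_compat_l; lra. Qed.
Lemma Escal_inv t e : 0 < t -> Escal t (Escal (/t) e) = e.
Proof. intros Ht. destruct e; simpl; auto. f_equal. field. lra. Qed.

Lemma Rsup_scal_le (A B : R -> Prop) t : 0 < t -> (forall b, B b -> exists a, A a /\ b <= t * a) ->
  Ele (Rsup B) (Escal t (Rsup A)).
Proof.
intros Ht HB. apply Rsup_lub. intros b Hb. destruct (HB b Hb) as [a [Ha Hab]].
apply Ele_trans with (Escal t (Fin a)). simpl. exact Hab.
apply Escal_mono; auto. apply Rsup_ub; auto.
Qed.

Lemma Rsup_scal (A B : R -> Prop) t : 0 < t -> (forall b, B b -> exists a, A a /\ b <= t * a) ->
  (forall a, A a -> exists b, B b /\ a <= /t * b) -> Rsup B = Escal t (Rsup A).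
Proof.
intros Ht H1 H2. apply Ele_antisym. apply Rsup_scal_le; auto.
rewrite <- (Escal_inv t (Rsup B)) by auto. apply Escal_mono; auto. apply Rsup_scal_le; auto.
apply Rinv_0_lt_compat; auto.
Qed.

Lemma Ele_Elt a b c : Ele a b -> Elt b c -> Elt a c.
Proof. intros H1 [H2 H3]. split. eapply Ele_trans; eauto. intros E. subst. apply H3. apply Ele_antisym; auto. Qed.
Lemma Elt_Fin x y : Elt (Fin x) (Fin y) -> x < y.
Proof. intros [H1 H2]. simpl in H1. destruct (Req_dec x y). subst. exfalso; auto. lra. Qed.

Fixpoint sigf (tau : (nat -> nat) -> nat -> nat -> nat) (m : nat) : nat -> nat :=
  match m with O => fun k => k | S m' => fun k => sigf tau m' (tau (sigf tau m') m' k) end.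

Lemma strict_ge (phi : nat -> nat) : (forall k, (phi k < phi (S k))%nat) -> forall k, (k <= phi k)%nat.
Proof. intros H k. induction k. lia. specialize (H k). lia. Qed.

Lemma sigf_sub tau : (forall s m k, (tau s m k < tau s m (S k))%nat) ->
  forall d m k, exists i, (k <= i)%nat /\ sigf tau (m + d) k = sigf tau m i.
Proof.
intros Ht d. induction d; intros m k.
- exists k. rewrite Nat.add_0_r. split; auto.
- replace (m + S d)%nat with (S (m + d)) by lia. simpl.
  destruct (IHd m (tau (sigf tau (m + d)%nat) (m + d)%nat k)) as [i [Hi Ei]].
  exists i. split. pose proof (strict_ge _ (Ht (sigf tau (m+d)) (m+d)%nat) k). lia. exact Ei.
Qed.

Lemma fconv_tail (E : FLat) (a b : nat -> E) L N : fconv a L -> (forall j, (N <= j)%nat -> exists i, (j <= i)%nat /\ b j = a i) -> fconv b L.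
Proof. intros Ha Hb j eps He. destruct (Ha j eps He) as [N0 HN]. exists (max N N0). intros k Hk.
  destruct (Hb k ltac:(lia)) as [i [Hi ->]]. apply HN. lia. Qed.

Section VAlg.
Variable V : VLat.
Implicit Types x y z a b c : V.

Lemma vadd0l x : vadd vzero x = x.
Proof. rewrite vaddC. apply vadd0. Qed.
Lemma vaddNl x : vadd (vopp x) x = vzero.
Proof. rewrite vaddC. apply vaddN. Qed.
Lemma vadd_cancel x y z : vadd x z = vadd y z -> x = y.
Proof. intros H. rewrite <- (vadd0 V x), <- (vadd0 V y), <- (vaddN V z), !vaddA, H. reflexivity. Qed.
Lemma vscal0 x : vscal 0 x = vzero.
Proof. apply (vadd_cancel _ _ (vscal 0 x)). rewrite vadd0l, <- vscalDl. f_equal; ring. Qed.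
Lemma vscal_zero t : vscal t (@vzero V) = vzero.
Proof. rewrite <- (vscal0 vzero), vscalA. f_equal. ring. Qed.
Lemma vopp_scal x : vopp x = vscal (-1) x.
Proof. apply (vadd_cancel _ _ x). rewrite vaddNl.
  transitivity (vadd (vscal (-1) x) (vscal 1 x)).
  rewrite <- vscalDl. replace (-1+1) with 0 by ring. symmetry; apply vscal0.
  rewrite vscal1. reflexivity. Qed.
Lemma vscal_opp t x : vscal t (vopp x) = vscal (-t) x.
Proof. rewrite vopp_scal, vscalA. f_equal; ring. Qed.
Lemma vopp_vopp x : vopp (vopp x) = x.
Proof. rewrite !vopp_scal, vscalA. replace (-1 * -1) with 1 by ring. apply vscal1. Qed.
Lemma vopp_add x y : vopp (vadd x y) = vadd (vopp x) (vopp y).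
Proof. rewrite !vopp_scal. apply vscalDr. Qed.
Lemma vopp_zero : vopp (@vzero V) = vzero.
Proof. rewrite vopp_scal. apply vscal_zero. Qed.
Lemma vsub_add x y : vadd (vsub x y) y = x.
Proof. unfold vsub. rewrite <- vaddA, vaddNl, vadd0. reflexivity. Qed.
Lemma vadd_sub x y : vsub (vadd x y) y = x.
Proof. unfold vsub. rewrite <- vaddA, vaddN, vadd0. reflexivity. Qed.
Lemma vsub_self x : vsub x x = vzero.
Proof. apply vaddN. Qed.
Lemma vsub0 x : vsub x vzero = x.
Proof. unfold vsub. rewrite vopp_zero. apply vadd0. Qed.
Lemma vadd_swap a b c d : vadd (vadd a b) (vadd c d) = vadd (vadd a c) (vadd b d).
Proof. rewrite <- !vaddA. f_equal. rewrite !vaddA. f_equal. apply vaddC. Qed.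
Lemma vsub_addsub a b c d : vsub (vadd a b) (vadd c d) = vadd (vsub a c) (vsub b d).
Proof. unfold vsub. rewrite vopp_add. apply vadd_swap. Qed.
Lemma vscal_sub t a b : vscal t (vsub a b) = vsub (vscal t a) (vscal t b).
Proof. unfold vsub. rewrite vscalDr, vscal_opp, vopp_scal, vscalA. f_equal. f_equal. ring. Qed.
Lemma vsub_opp x y : vopp (vsub x y) = vsub y x.
Proof. unfold vsub. rewrite vopp_add, vopp_vopp. apply vaddC. Qed.

Lemma vle_add2 a b c d : vle a b -> vle c d -> vle (vadd a c) (vadd b d).
Proof. intros H1 H2. apply vle_trans with (vadd b c). apply vle_add; auto.
  rewrite (vaddC V b c), (vaddC V b d). apply vle_add; auto. Qed.
Lemma vle_addl a b c : vle a b -> vle (vadd c a) (vadd c b).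
Proof. intros H. rewrite (vaddC V c a), (vaddC V c b). apply vle_add; auto. Qed.
Lemma vle_add_cancel a b c : vle (vadd a c) (vadd b c) -> vle a b.
Proof. intros H. rewrite <- (vadd_sub a c), <- (vadd_sub b c). apply vle_add. exact H. Qed.
Lemma vle_sub0 a b : vle a b -> vle vzero (vsub b a).
Proof. intros H. rewrite <- (vsub_self a). apply vle_add. exact H. Qed.
Lemma vle_sub0' a b : vle vzero (vsub b a) -> vle a b.
Proof. intros H. rewrite <- (vsub_add b a). rewrite <- (vadd0l a) at 1. apply vle_add. exact H. Qed.
Lemma vle_opp a b : vle a b -> vle (vopp b) (vopp a).
Proof. intros H. apply vle_add_cancel with (vadd a b).
  rewrite (vaddC V a b) at 1. rewrite vaddA, vaddNl, vadd0l, vaddA, vaddNl, vadd0l. exact H. Qed.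
Lemma vle_scal_inv t a b : 0 < t -> vle (vscal t a) (vscal t b) -> vle a b.
Proof. intros Ht H. rewrite <- (vscal1 V a), <- (vscal1 V b).
  replace 1 with (/t * t) by (field; lra). rewrite <- !vscalA. apply vle_scal; auto.
  left; apply Rinv_0_lt_compat; auto. Qed.
Lemma vle_pos_add a b : vle vzero a -> vle vzero b -> vle vzero (vadd a b).
Proof. intros H1 H2. rewrite <- (vadd0 V vzero). apply vle_add2; auto. Qed.
Lemma vle_scal_pos t a : 0 <= t -> vle vzero a -> vle vzero (vscal t a).
Proof. intros Ht H. rewrite <- (vscal_zero t). apply vle_scal; auto. Qed.
Lemma vle_le_add a b : vle vzero b -> vle a (vadd a b).
Proof. intros H. rewrite <- (vadd0 V a) at 1. apply vle_addl. exact H. Qed.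

Lemma vjoin_le_eq a b : vle a b -> vjoin a b = b.
Proof. intros H. apply vle_antisym. apply vjoin_lub; auto. apply vle_refl. apply vjoin_r. Qed.
Lemma vjoin_le_eq' a b : vle b a -> vjoin a b = a.
Proof. intros H. apply vle_antisym. apply vjoin_lub; auto. apply vle_refl. apply vjoin_l. Qed.
Lemma vjoin_mono a a' b : vle a a' -> vle (vjoin a b) (vjoin a' b).
Proof. intros H. apply vjoin_lub. apply vle_trans with a'; auto. apply vjoin_l. apply vjoin_r. Qed.
Lemma vabs_pos x : vle vzero (vabs x).
Proof.
unfold vabs. set (j := vjoin x (vopp x)).
assert (H1: vle x j) by apply vjoin_l. assert (H2: vle (vopp x) j) by apply vjoin_r.
assert (H: vle vzero (vadd j j)).
{ rewrite <- (vaddN V x). apply vle_trans with (vadd j (vopp x)). apply vle_add; auto. apply vle_addl; auto. }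
rewrite <- (vscal_zero (/2)). replace j with (vscal (/2) (vadd j j)).
apply vle_scal; auto. lra.
rewrite <- (vscal1 V j) at 1 2. rewrite <- vscalDl, vscalA. replace (/2 * (1+1)) with 1 by field. apply vscal1.
Qed.
Lemma vabs_of_pos x : vle vzero x -> vabs x = x.
Proof. intros H. apply vjoin_le_eq'. apply vle_trans with vzero; auto.
  rewrite <- vopp_zero. apply vle_opp. auto. Qed.
Lemma vabs_abs x : vabs (vabs x) = vabs x.
Proof. apply vabs_of_pos. apply vabs_pos. Qed.
Lemma vle_abs x : vle x (vabs x).
Proof. apply vjoin_l. Qed.
Lemma vle_abs_opp x : vle (vopp x) (vabs x).
Proof. apply vjoin_r. Qed.
Lemma vabs_opp x : vabs (vopp x) = vabs x.
Proof. unfold vabs. rewrite vopp_vopp. apply vle_antisym; apply vjoin_lub; try apply vjoin_l; apply vjoin_r. Qed.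
End VAlg.

Arguments vadd0l {V}. Arguments vaddNl {V}. Arguments vscal0 {V}. Arguments vscal_zero {V}.
Arguments vopp_scal {V}. Arguments vopp_vopp {V}. Arguments vopp_add {V}. Arguments vopp_zero {V}.
Arguments vsub_add {V}. Arguments vadd_sub {V}. Arguments vsub_self {V}. Arguments vsub0 {V}.
Arguments vadd_swap {V}. Arguments vsub_addsub {V}. Arguments vscal_sub {V}. Arguments vsub_opp {V}.
Arguments vle_add2 {V}. Arguments vle_addl {V}. Arguments vle_add_cancel {V}. Arguments vle_sub0 {V}.
Arguments vle_sub0' {V}. Arguments vle_opp {V}. Arguments vle_scal_inv {V}. Arguments vle_pos_add {V}.
Arguments vle_scal_pos {V}. Arguments vle_le_add {V}. Arguments vjoin_le_eq {V}. Arguments vjoin_le_eq' {V}.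
Arguments vjoin_mono {V}. Arguments vabs_pos {V}. Arguments vabs_of_pos {V}. Arguments vabs_abs {V}.
Arguments vle_abs {V}. Arguments vle_abs_opp {V}. Arguments vabs_opp {V}. Arguments vscal_opp {V}.
Arguments vadd_cancel {V}.

Section SN.
Variable F : FLat.
Implicit Types x y : F.
Lemma sn_opp j x : sn j (vopp x) = sn j x.
Proof. rewrite vopp_scal, sn_homog. rewrite Rabs_left by lra. ring. Qed.
Lemma sn_nonneg j x : 0 <= sn j x.
Proof. pose proof (sn_triangle F j x (vopp x)). rewrite vaddN in H.
  pose proof (sn_homog F j 0 vzero). rewrite vscal0, Rabs_R0 in H0. rewrite sn_opp in H. lra. Qed.
Lemma sn_zero j : sn j (@vzero F) = 0.
Proof. pose proof (sn_homog F j 0 vzero). rewrite vscal0, Rabs_R0 in H. lra. Qed.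
Lemma sn_sub_sym j x y : sn j (vsub x y) = sn j (vsub y x).
Proof. rewrite <- vsub_opp. apply sn_opp. Qed.
Lemma sn_abs j x : sn j (vabs x) = sn j x.
Proof. apply Rle_antisym; apply sn_solid; rewrite ?vabs_abs; apply vle_refl. Qed.
Lemma sn_sub_tri j x y z : sn j (vsub x z) <= sn j (vsub x y) + sn j (vsub y z).
Proof. replace (vsub x z) with (vadd (vsub x y) (vsub y z)). apply sn_triangle.
  unfold vsub. rewrite <- vaddA. f_equal. rewrite vaddA, vaddNl, vadd0l. reflexivity. Qed.
Lemma sn_le_pos j x y : vle vzero x -> vle x y -> sn j x <= sn j y.
Proof. intros H1 H2. apply sn_solid. rewrite !vabs_of_pos; auto. apply vle_trans with x; auto. Qed.
End SN.
Arguments sn_opp {F}. Arguments sn_nonneg {F}. Arguments sn_zero {F}. Arguments sn_sub_sym {F}.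
Arguments sn_abs {F}. Arguments sn_sub_tri {F}. Arguments sn_le_pos {F}.

Section PL.
Variable X : nat -> FLat.

Definition popp (x : Prod X) : Prod X := fun n => vopp (x n).
Definition pjoin (x y : Prod X) : Prod X := fun n => vjoin (x n) (y n).

Ltac fe := let n := fresh "n" in apply functional_extensionality_dep; intro n.

Definition PL : VLat.
refine {| vcar := Prod X; vzero := pzero X; vadd := padd X; vopp := popp; vscal := pscal X;
  vle := ple X; vjoin := pjoin |};
unfold padd, pscal, popp, pzero, ple, pjoin; intros.
- fe. apply vaddA.
- fe. apply vaddC.
- fe. apply vadd0.
- fe. apply vaddN.
- fe. apply vscal1.
- fe. apply vscalA.
- fe. apply vscalDr.
- fe. apply vscalDl.
- apply vle_refl.
- fe. apply vle_antisym; auto.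
- eapply vle_trans; eauto.
- apply vle_add; auto.
- apply vle_scal; auto.
- apply vjoin_l.
- apply vjoin_r.
- apply vjoin_lub; auto.
Defined.

Lemma PL_add x y : @vadd PL x y = padd X x y. Proof. reflexivity. Qed.

Variable p : forall n, X (S n) -> X n.
Hypothesis p_lin : forall n, linear_map (p n).
Hypothesis p_pos : forall n, positive_map (p n).
Hypothesis p_reg : regular_lim X p.

Lemma p_add n a b : p n (vadd a b) = vadd (p n a) (p n b).
Proof. apply (proj1 (p_lin n)). Qed.
Lemma p_scal n t a : p n (vscal t a) = vscal t (p n a).
Proof. apply (proj2 (p_lin n)). Qed.
Lemma p_zero n : p n vzero = vzero.
Proof. rewrite <- (vscal0 vzero), p_scal. apply vscal0. Qed.
Lemma p_opp n a : p n (vopp a) = vopp (p n a).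
Proof. rewrite !vopp_scal. apply p_scal. Qed.
Lemma p_sub n a b : p n (vsub a b) = vsub (p n a) (p n b).
Proof. unfold vsub. rewrite p_add, p_opp. reflexivity. Qed.
Lemma p_mono n a b : vle a b -> vle (p n a) (p n b).
Proof. intros H. apply vle_sub0'. rewrite <- p_sub. apply p_pos. apply vle_sub0. exact H. Qed.

Lemma lim_zero : in_lim X p (pzero X).
Proof. intro n. unfold pzero. symmetry. apply p_zero. Qed.
Lemma lim_add x y : in_lim X p x -> in_lim X p y -> in_lim X p (padd X x y).
Proof. intros Hx Hy n. unfold padd. rewrite p_add, <- Hx, <- Hy. reflexivity. Qed.
Lemma lim_scal t x : in_lim X p x -> in_lim X p (pscal X t x).
Proof. intros Hx n. unfold pscal. rewrite p_scal, <- Hx. reflexivity. Qed.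
Lemma lim_opp x : in_lim X p x -> in_lim X p (popp x).
Proof. intros Hx n. unfold popp. rewrite p_opp, <- Hx. reflexivity. Qed.
Lemma lim_sub x y : in_lim X p x -> in_lim X p y -> in_lim X p (@vsub PL x y).
Proof. intros. apply lim_add; auto. apply lim_opp; auto. Qed.
Lemma lim_join x y : in_lim X p x -> in_lim X p y -> in_lim X p (pjoin x y).
Proof. intros Hx Hy n. unfold pjoin. rewrite p_reg, <- Hx, <- Hy. reflexivity. Qed.

Lemma lim_down x y : in_lim X p x -> in_lim X p y -> forall d k,
  vle (x (k + d)%nat) (y (k + d)%nat) -> vle (x k) (y k).
Proof.
intros Hx Hy d. induction d; intros k H.
- rewrite Nat.add_0_r in H. exact H.
- apply IHd. rewrite (Hx (k+d)%nat), (Hy (k+d)%nat). apply p_mono.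
  replace (S (k + d)) with (k + S d)%nat by lia. exact H.
Qed.
Lemma lim_down' x y k n : in_lim X p x -> in_lim X p y -> (k <= n)%nat ->
  vle (x n) (y n) -> vle (x k) (y k).
Proof. intros Hx Hy Hkn H. apply (lim_down x y Hx Hy (n - k)). replace (k + (n-k))%nat with n by lia. exact H. Qed.

Fixpoint Pd (n : nat) : X n -> X 0%nat :=
  match n return X n -> X 0%nat with
  | O => fun y => y
  | S m => fun y => Pd m (p m y)
  end.
Lemma Pd_add n a b : Pd n (vadd a b) = vadd (Pd n a) (Pd n b).
Proof. induction n; simpl; auto. rewrite p_add. apply IHn. Qed.
Lemma Pd_scal n t a : Pd n (vscal t a) = vscal t (Pd n a).
Proof. induction n; simpl; auto. rewrite p_scal. apply IHn. Qed.
Lemma Pd_mono n a b : vle a b -> vle (Pd n a) (Pd n b).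
Proof. induction n; simpl; auto. intros H. apply IHn. apply p_mono. exact H. Qed.
Lemma Pd_lim n x : in_lim X p x -> Pd n (x n) = x 0%nat.
Proof. intros Hx. induction n; simpl; auto. rewrite <- Hx. exact IHn. Qed.

Hypothesis p_red : reduced_lim X p.
Lemma lift_pos n (y : X n) : vle vzero y -> exists w, in_lim X p w /\ w n = y /\ ple X (pzero X) w.
Proof.
intros Hy. destruct (p_red n y) as [w [Hw Hwn]].
exists (pjoin w (pzero X)). split. apply lim_join; auto. apply lim_zero.
split. unfold pjoin, pzero. rewrite Hwn. apply vjoin_le_eq'. exact Hy.
intro k. unfold pjoin, pzero. apply vjoin_r.
Qed.
Lemma lift_above n (h : Prod X) (y : X n) : in_lim X p h -> vle (h n) y ->
  exists x, in_lim X p x /\ x n = y /\ ple X h x.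
Proof.
intros Hh Hle. destruct (lift_pos n (vsub y (h n))) as [w [Hw [Hwn Hwp]]].
apply vle_sub0; auto.
exists (padd X h w). split. apply lim_add; auto. split.
unfold padd. rewrite Hwn, vaddC. apply vsub_add.
intro k. unfold padd. apply vle_le_add. apply Hwp.
Qed.
End PL.

Section FA.
Variable E : FLat.

Fixpoint rho (j : nat) (w : E) : R :=
  match j with O => sn 0 w | S i => Rmax (rho i w) (sn (S i) w) end.
Lemma rho_ge j i w : (i <= j)%nat -> sn i w <= rho j w.
Proof. induction j; intros H; simpl.
- replace i with 0%nat by lia. lra.
- destruct (Nat.eq_dec i (S j)). subst. apply Rmax_r.
  eapply Rle_trans. apply IHj; lia. apply Rmax_l. Qed.
Lemma rho_lt j w eps : (forall i, (i <= j)%nat -> sn i w < eps) -> rho j w < eps.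
Proof. induction j; intros H; simpl. apply H; lia. apply Rmax_lub_lt. apply IHj; intros; apply H; lia. apply H; lia. Qed.
Lemma rho_homog j t w : rho j (vscal t w) = Rabs t * rho j w.
Proof. induction j; simpl. apply sn_homog. rewrite IHj, sn_homog.
  unfold Rmax. destruct (Rle_dec (rho j w) (sn (S j) w)), (Rle_dec (Rabs t * rho j w) (Rabs t * sn (S j) w)); auto.
  - destruct (Req_dec (Rabs t) 0). rewrite H; ring. pose proof (Rabs_pos t).
    exfalso. apply n. apply Rmult_le_compat_l; lra.
  - destruct (Req_dec (Rabs t) 0). rewrite H; ring. pose proof (Rabs_pos t).
    exfalso. apply n. apply Rmult_le_reg_l with (Rabs t); lra. Qed.
Lemma rho_nonneg j w : 0 <= rho j w.
Proof. eapply Rle_trans. apply (sn_nonneg 0%nat w). apply rho_ge. lia. Qed.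
Lemma rho_sub_sym j x y : rho j (vsub x y) = rho j (vsub y x).
Proof. induction j; simpl. apply sn_sub_sym. rewrite IHj, sn_sub_sym. reflexivity. Qed.
Lemma rho_tri j x y : rho j (vadd x y) <= rho j x + rho j y.
Proof. induction j; simpl. apply sn_triangle. apply Rmax_lub.
  eapply Rle_trans. apply IHj. apply Rplus_le_compat; apply Rmax_l.
  eapply Rle_trans. apply sn_triangle. apply Rplus_le_compat; apply Rmax_r. Qed.
Lemma rho_mono j j' w : (j <= j')%nat -> rho j w <= rho j' w.
Proof. intros H. induction j. simpl. apply rho_ge; lia.
  simpl. apply Rmax_lub. apply IHj; lia. apply rho_ge; lia. Qed.

Lemma fconv_rho (u : nat -> E) L : fconv u L -> forall j eps, 0 < eps ->
  exists N, forall k, (N <= k)%nat -> rho j (vsub (u k) L) < eps.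
Proof.
intros Hc j eps He. induction j.
- destruct (Hc 0%nat eps He) as [N HN]. exists N. intros. simpl. auto.
- destruct IHj as [N1 H1]. destruct (Hc (S j) eps He) as [N2 H2].
  exists (max N1 N2). intros k Hk. simpl. apply Rmax_lub_lt. apply H1; lia. apply H2; lia.
Qed.

Lemma fconv_ge (u : nat -> E) L z : fconv u L -> (exists N, forall k, (N <= k)%nat -> vle z (u k)) -> vle z L.
Proof.
intros Hc [N HN]. apply vle_sub0'.
set (d := vsub L z).
assert (Hd: forall j, sn j (vjoin (vopp d) vzero) = 0).
{ intros j. apply Rle_antisym; [|apply sn_nonneg].
  apply Rnot_lt_le. intros Hlt. destruct (Hc j _ Hlt) as [N2 HN2].
  set (k := max N N2). specialize (HN2 k ltac:(lia)). specialize (HN k ltac:(lia)).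
  assert (sn j (vjoin (vopp d) vzero) <= sn j (vsub (u k) L)).
  { apply sn_solid. rewrite vabs_of_pos by apply vjoin_r.
    apply vle_trans with (vjoin (vsub (u k) L) vzero).
    - apply vjoin_mono. unfold d. rewrite vsub_opp. unfold vsub. apply vle_add. exact HN.
    - apply vjoin_lub. apply vle_abs. apply vabs_pos. }
  lra. }
apply sn_sep in Hd. apply vle_trans with (vadd d (vjoin (vopp d) vzero)).
rewrite <- (vaddN E d) at 1. apply vle_addl. apply vjoin_l.
rewrite Hd, vadd0. apply vle_refl.
Qed.
Lemma fconv_le (u : nat -> E) L z : fconv u L -> (exists N, forall k, (N <= k)%nat -> vle (u k) z) -> vle L z.
Proof.
intros Hc HN. apply vle_sub0'. apply (fconv_ge (fun k => vsub z (u k))).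
- intros j eps He. destruct (Hc j eps He) as [N HN2]. exists N. intros k Hk.
  replace (vsub (vsub z (u k)) (vsub z L)) with (vsub L (u k)).
  rewrite sn_sub_sym. auto. symmetry. unfold vsub. rewrite vopp_add, vopp_vopp.
  rewrite vadd_swap, vaddN, vadd0l. apply vaddC.
- destruct HN as [N HN]. exists N. intros. apply vle_sub0. auto.
Qed.

Lemma fconv_unique (u : nat -> E) a b : fconv u a -> fconv u b -> a = b.
Proof.
intros Ha Hb. cut (vsub a b = vzero). intros H0. rewrite <- (vsub_add a b), H0. apply vadd0l.
apply sn_sep. intros j. apply Rle_antisym; [|apply sn_nonneg]. apply Rnot_lt_le. intros Hlt.
destruct (Ha j (sn j (vsub a b) / 2)) as [N1 H1]. lra. destruct (Hb j (sn j (vsub a b) / 2)) as [N2 H2]. lra.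
specialize (H1 (max N1 N2) ltac:(lia)). specialize (H2 (max N1 N2) ltac:(lia)).
pose proof (sn_sub_tri j a (u (max N1 N2)) b) as H. rewrite (sn_sub_sym j a (u _)) in H. lra.
Qed.

Lemma fconv_sub (u : nat -> E) L (r : nat -> nat) : fconv u L -> (forall j, (j <= r j)%nat) -> fconv (fun j => u (r j)) L.
Proof. intros Hc Hr j eps He. destruct (Hc j eps He) as [N HN]. exists N. intros k Hk. apply HN. specialize (Hr k). lia. Qed.

Fixpoint psum (w : nat -> E) (m : nat) : E :=
  match m with O => vzero | S k => vadd (psum w k) (vabs (w k)) end.

Lemma psum_bound (w : nat -> E) i : (forall k, (i <= k)%nat -> sn i (w k) <= (/2)^k) ->
  forall m d, (i <= m)%nat -> sn i (vsub (psum w (m + d)) (psum w m)) <= 2 * (/2)^m - 2 * (/2)^(m+d).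
Proof.
intros Hw m d Hm. induction d.
- rewrite Nat.add_0_r, vsub_self, sn_zero. lra.
- replace (m + S d)%nat with (S (m + d)) by lia. simpl psum.
  replace (vsub (vadd (psum w (m + d)%nat) (vabs (w (m + d)%nat))) (psum w m)) with
     (vadd (vsub (psum w (m + d)%nat) (psum w m)) (vabs (w (m + d)%nat))).
  2:{ unfold vsub. rewrite <- !vaddA. f_equal. apply vaddC. }
  eapply Rle_trans. apply sn_triangle. rewrite sn_abs.
  pose proof (Hw (m + d)%nat ltac:(lia)). simpl pow. lra.
Qed.

Lemma psum_mono (w : nat -> E) m d : vle (psum w m) (psum w (m + d)).
Proof. induction d. rewrite Nat.add_0_r. apply vle_refl.
  replace (m + S d)%nat with (S (m + d)) by lia. simpl. apply vle_trans with (psum w (m+d)); auto.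
  apply vle_le_add. apply vabs_pos. Qed.

Lemma half_pow_small eps : 0 < eps -> exists N, forall n, (N <= n)%nat -> 2 * (/2)^n < eps.
Proof. intros He. destruct (pow_lt_1_zero (/2) ltac:(rewrite Rabs_pos_eq; lra) (eps/2) ltac:(lra)) as [N HN].
  exists N. intros n Hn. specialize (HN n Hn). rewrite Rabs_pos_eq in HN. lra. apply pow_le. lra. Qed.

Lemma series_dom (w : nat -> E) : (forall i k, (i <= k)%nat -> sn i (w k) <= (/2)^k) ->
  exists s, forall m, vle (vabs (w m)) s.
Proof.
intros Hw. destruct (sn_complete E (psum w)) as [s Hs].
- intros j eps He. destruct (half_pow_small eps He) as [N HN]. exists (max N j). intros m k Hm Hk.
  destruct (Nat.le_gt_cases k m) as [Hkm|Hkm].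
  + replace m with (k + (m - k))%nat by lia. pose proof (psum_bound w j (Hw j) k (m-k) ltac:(lia)).
    pose proof (HN k ltac:(lia)). pose proof (pow_le (/2) (k + (m-k))). lra.
  + rewrite sn_sub_sym. replace k with (m + (k - m))%nat by lia. pose proof (psum_bound w j (Hw j) m (k-m) ltac:(lia)).
    pose proof (HN m ltac:(lia)). pose proof (pow_le (/2) (m + (k-m))). lra.
- exists s. intros m. apply (fconv_ge (psum w) s). exact Hs. exists (S m). intros k Hk.
  apply vle_trans with (psum w (S m)). simpl. rewrite <- (vadd0l (vabs (w m))) at 1.
  apply vle_add. clear. induction m. apply vle_refl. simpl. rewrite <- (vadd0 E vzero). apply vle_add2; auto. apply vabs_pos.
  replace k with (S m + (k - S m))%nat by lia. apply psum_mono.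
Qed.

Lemma four_two k : 2 ^ k * (/4)^k = (/2)^k.
Proof. rewrite <- Rpow_mult_distr. f_equal. field. Qed.

Lemma auto_cont_fun (T : E -> R) : (forall a b, T (vadd a b) = T a + T b) -> (forall t a, T (vscal t a) = t * T a) ->
  (forall a, vle vzero a -> 0 <= T a) -> exists j C, 0 <= C /\ forall w, Rabs (T w) <= C * rho j w.
Proof.
intros Tadd Tscal Tpos. apply NNPP. intros Hn.
assert (Hw: forall k, exists w, 4 ^ k * rho k w < Rabs (T w)).
{ intros k. apply NNPP. intros H. apply Hn. exists k, (4^k). split. apply pow_le; lra.
  intros w. apply Rnot_lt_le. intros H2. apply H. exists w. exact H2. }
set (w := fun k => proj1_sig (constructive_indefinite_description _ (Hw k))).
assert (Hw' : forall k, 4 ^ k * rho k (w k) < Rabs (T (w k))) by (intro k; exact (proj2_sig (constructive_indefinite_description _ (Hw k)))).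
clearbody w.
assert (Tmono : forall a b, vle a b -> T a <= T b).
{ intros a b H. apply vle_sub0 in H. apply Tpos in H. unfold vsub in H. rewrite Tadd, vopp_scal, Tscal in H. lra. }
assert (Tabs : forall a, Rabs (T a) <= T (vabs a)).
{ intros a. apply Rabs_le. split. pose proof (Tmono _ _ (vle_abs_opp a)). rewrite vopp_scal, Tscal in H. lra.
  apply Tmono. apply vle_abs. }
set (z := fun k => vscal (2^k / Rabs (T (w k))) (w k)).
assert (Hpos: forall k, 0 < Rabs (T (w k))).
{ intros k. eapply Rle_lt_trans; [|apply Hw']. apply Rmult_le_pos. apply pow_le; lra. apply rho_nonneg. }
assert (Hz : forall i k, (i <= k)%nat -> sn i (z k) <= (/2)^k).
{ intros i k Hik. eapply Rle_trans. apply rho_ge. exact Hik. unfold z. rewrite rho_homog.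
  rewrite Rabs_pos_eq. 2:{ apply Rmult_le_pos. apply pow_le; lra. left; apply Rinv_0_lt_compat; auto. }
  rewrite <- four_two. specialize (Hw' k). specialize (Hpos k).
  assert (rho k (w k) <= (/4)^k * Rabs (T (w k))).
  { apply Rmult_le_reg_l with (4^k). apply pow_lt; lra. rewrite <- Rmult_assoc, <- Rpow_mult_distr.
    replace (4 * /4) with 1 by field. rewrite pow1. lra. }
  unfold Rdiv. replace (2 ^ k * / Rabs (T (w k)) * rho k (w k)) with (2^k * (rho k (w k) / Rabs (T (w k)))) by (field; lra).
  apply Rmult_le_compat_l. apply pow_le; lra. apply Rmult_le_reg_r with (Rabs (T (w k))). auto.
  unfold Rdiv. rewrite Rmult_assoc, Rinv_l by lra. lra. }
destruct (series_dom z Hz) as [s Hs].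
assert (Hk: forall k, 2 ^ k <= T s).
{ intros k. eapply Rle_trans; [|apply Tmono; apply (Hs k)]. eapply Rle_trans; [|apply Tabs].
  unfold z. rewrite Tscal, Rabs_mult, Rabs_pos_eq. 2:{ apply Rmult_le_pos. apply pow_le; lra. left; apply Rinv_0_lt_compat; auto. }
  specialize (Hpos k). right. field. lra. }
destruct (Pow_x_infinity 2 ltac:(rewrite Rabs_pos_eq; lra) (T s + 1)) as [N HN].
specialize (HN N (le_n _)). specialize (Hk N). rewrite Rabs_pos_eq in HN. lra. apply pow_le; lra.
Qed.

Variable F : FLat.
Lemma auto_cont_op (T : E -> F) : linear_map T -> positive_map T ->
  forall j, exists i C, 0 <= C /\ forall w, sn j (T w) <= C * rho i w.
Proof.
intros [Tadd Tscal] Tpos j. apply NNPP. intros Hn.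
assert (Hw: forall k, exists w, 4 ^ k * rho k w < sn j (T w)).
{ intros k. apply NNPP. intros H. apply Hn. exists k, (4^k). split. apply pow_le; lra.
  intros w. apply Rnot_lt_le. intros H2. apply H. exists w. exact H2. }
set (w := fun k => proj1_sig (constructive_indefinite_description _ (Hw k))).
assert (Hw' : forall k, 4 ^ k * rho k (w k) < sn j (T (w k))) by (intro k; exact (proj2_sig (constructive_indefinite_description _ (Hw k)))).
clearbody w.
assert (Tmono : forall a b, vle a b -> vle (T a) (T b)).
{ intros a b H. apply vle_sub0'. apply vle_sub0 in H. apply Tpos in H. unfold vsub in H. rewrite Tadd, vopp_scal, Tscal, <- vopp_scal in H. exact H. }
assert (Tabs : forall a, vle (vabs (T a)) (T (vabs a))).
{ intros a. apply vjoin_lub. apply Tmono. apply vle_abs.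
  pose proof (Tmono _ _ (vle_abs_opp a)). rewrite vopp_scal, Tscal, <- vopp_scal in H. exact H. }
set (z := fun k => vscal (2^k / sn j (T (w k))) (w k)).
assert (Hpos: forall k, 0 < sn j (T (w k))).
{ intros k. eapply Rle_lt_trans; [|apply Hw']. apply Rmult_le_pos. apply pow_le; lra. apply rho_nonneg. }
assert (Hz : forall i k, (i <= k)%nat -> sn i (z k) <= (/2)^k).
{ intros i k Hik. eapply Rle_trans. apply rho_ge. exact Hik. unfold z. rewrite rho_homog.
  rewrite Rabs_pos_eq. 2:{ apply Rmult_le_pos. apply pow_le; lra. left; apply Rinv_0_lt_compat; auto. }
  rewrite <- four_two. specialize (Hw' k). specialize (Hpos k).
  assert (rho k (w k) <= (/4)^k * sn j (T (w k))).
  { apply Rmult_le_reg_l with (4^k). apply pow_lt; lra. rewrite <- Rmult_assoc, <- Rpow_mult_distr.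
    replace (4 * /4) with 1 by field. rewrite pow1. lra. }
  unfold Rdiv. replace (2 ^ k * / sn j (T (w k)) * rho k (w k)) with (2^k * (rho k (w k) / sn j (T (w k)))) by (field; lra).
  apply Rmult_le_compat_l. apply pow_le; lra. apply Rmult_le_reg_r with (sn j (T (w k))). auto.
  unfold Rdiv. rewrite Rmult_assoc, Rinv_l by lra. lra. }
destruct (series_dom z Hz) as [s Hs].
assert (Hk: forall k, 2 ^ k <= sn j (T s)).
{ intros k. apply Rle_trans with (sn j (T (z k))).
  - unfold z. rewrite Tscal, sn_homog, Rabs_pos_eq. 2:{ apply Rmult_le_pos. apply pow_le; lra. left; apply Rinv_0_lt_compat; auto. }
    specialize (Hpos k). right. field. lra.
  - apply sn_solid. rewrite (vabs_of_pos (T s)). 2:{ apply Tpos. eapply vle_trans. apply vabs_pos. apply (Hs 0%nat). }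
    eapply vle_trans. apply Tabs. apply Tmono. apply Hs. }
destruct (Pow_x_infinity 2 ltac:(rewrite Rabs_pos_eq; lra) (sn j (T s) + 1)) as [N HN].
specialize (HN N (le_n _)). specialize (Hk N). rewrite Rabs_pos_eq in HN. lra. apply pow_le; lra.
Qed.

Lemma cont_op_fconv (T : E -> F) : linear_map T -> positive_map T ->
  forall u L, fconv u L -> fconv (fun k => T (u k)) (T L).
Proof.
intros Tl Tp u L Hc j eps He. destruct (auto_cont_op T Tl Tp j) as [i [C [HC HT]]].
destruct (fconv_rho u L Hc i (eps / (C + 1))) as [N HN]. apply Rdiv_lt_0_compat; lra.
exists N. intros k Hk. destruct Tl as [Tadd Tscal].
assert (E1: vsub (T (u k)) (T L) = T (vsub (u k) L)).
{ unfold vsub. rewrite Tadd, (vopp_scal L), Tscal, <- vopp_scal. reflexivity. }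
rewrite E1. eapply Rle_lt_trans. apply HT. specialize (HN k Hk).
apply Rle_lt_trans with ((C + 1) * rho i (vsub (u k) L)). pose proof (rho_nonneg i (vsub (u k) L)). nra.
apply Rmult_lt_reg_l with (/(C+1)). apply Rinv_0_lt_compat; lra.
rewrite <- Rmult_assoc, Rinv_l by lra. unfold Rdiv in HN. lra.
Qed.
End FA.

Lemma cont_fun_ge (E : FLat) (T : E -> R) : (forall a b, T (vadd a b) = T a + T b) -> (forall t a, T (vscal t a) = t * T a) ->
  (forall a, vle vzero a -> 0 <= T a) ->
  forall u L t, fconv u L -> (forall k, t <= T (u k)) -> t <= T L.
Proof.
intros Tadd Tscal Tpos u L t Hc Hk. destruct (auto_cont_fun E T Tadd Tscal Tpos) as [i [C [HC HT]]].
apply Rnot_lt_le. intros Hlt.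
destruct (fconv_rho E u L Hc i ((t - T L) / (C + 1))) as [N HN]. apply Rdiv_lt_0_compat; lra.
specialize (HN N (le_n _)). specialize (HT (vsub (u N) L)). specialize (Hk N).
assert (ET: T (vsub (u N) L) = T (u N) - T L) by (unfold vsub; rewrite Tadd, vopp_scal, Tscal; ring).
rewrite ET in HT.
assert (rho E i (vsub (u N) L) * (C+1) < t - T L).
{ apply Rmult_lt_reg_r with (/(C+1)). apply Rinv_0_lt_compat; lra. rewrite Rmult_assoc, Rinv_r by lra. unfold Rdiv in HN. lra. }
pose proof (rho_nonneg E i (vsub (u N) L)).
pose proof (Rle_abs (T (u N) - T L)) as HA. nra.
Qed.

Section HB.
Variable V : VLat.
Variable D : V -> Prop.
Hypothesis D0 : D vzero.
Hypothesis Dadd : forall x y, D x -> D y -> D (vadd x y).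
Hypothesis Dscal : forall t x, D x -> D (vscal t x).
Variable G : V -> R.
Hypothesis Gsup : forall x y, D x -> D y -> G x + G y <= G (vadd x y).
Hypothesis Ghom : forall t x, 0 < t -> D x -> G (vscal t x) = t * G x.

Lemma G0 : G vzero = 0.
Proof. pose proof (Ghom 2 vzero ltac:(lra) D0). rewrite vscal_zero in H. lra. Qed.

Definition good (M : V -> Prop) (f : V -> R) : Prop :=
  M vzero /\ (forall x y, M x -> M y -> M (vadd x y)) /\ (forall t x, M x -> M (vscal t x)) /\
  (forall x, M x -> D x) /\
  (forall x y, M x -> M y -> f (vadd x y) = f x + f y) /\ (forall t x, M x -> f (vscal t x) = t * f x) /\
  (forall x, M x -> G x <= f x).

Lemma vdecomp_unique (M : V -> Prop) (Madd : forall x y, M x -> M y -> M (vadd x y))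
  (Mscal : forall t x, M x -> M (vscal t x)) y1 : ~ M y1 ->
  forall d a d' a', M d -> M d' -> vadd d (vscal a y1) = vadd d' (vscal a' y1) -> a = a' /\ d = d'.
Proof.
intros Hn d a d' a' Hd Hd' E.
assert (E2: vscal (a - a') y1 = vsub d' d).
{ apply (vadd_cancel _ _ (vadd d (vscal a' y1))). unfold vsub.
  rewrite vaddA, (vaddC V (vscal (a - a') y1) d), <- vaddA, <- vscalDl. replace (a - a' + a') with a by ring.
  rewrite E. rewrite <- vaddA, (vaddA _ (vopp d)), vaddNl, vadd0l. reflexivity. }
destruct (Req_dec a a') as [Ea|Ea].
- split; auto. subst a'. apply (vadd_cancel _ _ (vscal a y1)). exact E.
- exfalso. apply Hn. replace y1 with (vscal (/(a - a')) (vsub d' d)).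
  apply Mscal. apply Madd; auto. rewrite vopp_scal. apply Mscal; auto.
  rewrite <- E2, vscalA. replace (/ (a - a') * (a - a')) with 1 by (field; lra). apply vscal1.
Qed.

Lemma ext_step M f : good M f -> forall y1, D y1 -> ~ M y1 -> forall c,
  (forall d, M d -> G (vadd d y1) - f d <= c) -> (forall d, M d -> c <= f d - G (vadd d (vopp y1))) ->
  exists M' f', good M' f' /\ (forall x, M x -> M' x) /\ (forall x, M x -> f' x = f x) /\ M' y1 /\ f' y1 = c.
Proof.
intros Hg y1 Dy1 Hn c Hc1 Hc2.
pose proof Hg as Hg'. destruct Hg' as [M0 [Madd [Mscal [MD [fadd [fscal fG]]]]]].
assert (Hu : forall d a d' a', M d -> M d' -> vadd d (vscal a y1) = vadd d' (vscal a' y1) -> a = a' /\ d = d').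
{ apply vdecomp_unique; auto. }
set (M' := fun z => exists d a, M d /\ z = vadd d (vscal a y1)).
set (f' := fun z => let da := epsilon (inhabits (vzero, 0)) (fun da => M (fst da) /\ z = vadd (fst da) (vscal (snd da) y1)) in
                   f (fst da) + snd da * c).
assert (Hf' : forall d a, M d -> f' (vadd d (vscal a y1)) = f d + a * c).
{ intros d a Hd. unfold f'. set (z := vadd d (vscal a y1)).
  pose proof (epsilon_spec (inhabits (vzero, 0)) (fun da => M (fst da) /\ z = vadd (fst da) (vscal (snd da) y1)) (ex_intro _ (d, a) (conj Hd eq_refl))) as [H1 H2].
  set (e := epsilon _ _) in *. destruct (Hu d a (fst e) (snd e) Hd H1 H2) as [Ea Ed]. rewrite <- Ea, <- Ed. reflexivity. }
exists M', f'. split; [|split; [|split; [|split]]].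
- repeat split.
  + exists vzero, 0. split; auto. rewrite vscal0, vadd0. reflexivity.
  + intros x y [d [a [Hd ->]]] [d' [a' [Hd' ->]]]. exists (vadd d d'), (a + a'). split; auto.
    rewrite vscalDl. apply vadd_swap.
  + intros t x [d [a [Hd ->]]]. exists (vscal t d), (t * a). split; auto. rewrite vscalDr, vscalA. reflexivity.
  + intros x [d [a [Hd ->]]]. apply Dadd; auto.
  + intros x y [d [a [Hd ->]]] [d' [a' [Hd' ->]]].
    rewrite vadd_swap, <- vscalDl, !Hf'; auto. rewrite fadd; auto. ring.
  + intros t x [d [a [Hd ->]]]. rewrite vscalDr, vscalA, !Hf'; auto. rewrite fscal; auto. ring.
  + intros x [d [a [Hd ->]]]. rewrite Hf'; auto.
    destruct (Rtotal_order a 0) as [Ha|[Ha|Ha]].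
    * set (b := - a). assert (Hb: 0 < b) by (unfold b; lra).
      replace (vadd d (vscal a y1)) with (vscal b (vadd (vscal (/b) d) (vopp y1))).
      assert (DD: D (vadd (vscal (/b) d) (vopp y1))) by (apply Dadd; [apply MD, Mscal, Hd | rewrite vopp_scal; apply Dscal; auto]).
      rewrite Ghom by auto.
      specialize (Hc2 (vscal (/b) d) (Mscal _ _ Hd)). rewrite fscal in Hc2; auto.
      replace (f d + a * c) with (b * (/b * f d - c)) by (unfold b; field; lra).
      apply Rmult_le_compat_l; lra.
      rewrite vscalDr, vscalA, vscal_opp. replace (b * /b) with 1 by (field; lra). rewrite vscal1. f_equal. f_equal. unfold b; ring.
    * subst a. rewrite vscal0, vadd0. replace (f d + 0 * c) with (f d) by ring. auto.
    * replace (vadd d (vscal a y1)) with (vscal a (vadd (vscal (/a) d) y1)).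
      assert (DD: D (vadd (vscal (/a) d) y1)) by (apply Dadd; auto; apply MD, Mscal, Hd).
      rewrite Ghom by auto.
      specialize (Hc1 (vscal (/a) d) (Mscal _ _ Hd)). rewrite fscal in Hc1; auto.
      replace (f d + a * c) with (a * (/a * f d + c)) by (field; lra).
      apply Rmult_le_compat_l; lra.
      rewrite vscalDr, vscalA. replace (a * /a) with 1 by (field; lra). rewrite vscal1. reflexivity.
- intros x Hx. exists x, 0. split; auto. rewrite vscal0, vadd0. reflexivity.
- intros x Hx. replace x with (vadd x (vscal 0 y1)) at 1 by (rewrite vscal0, vadd0; reflexivity).
  rewrite Hf'; auto. ring.
- exists vzero, 1. split; auto. rewrite vscal1, vadd0l. reflexivity.
- replace y1 with (vadd vzero (vscal 1 y1)) at 1 by (rewrite vscal1, vadd0l; reflexivity).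
  rewrite Hf'; auto. assert (f vzero = 0) as F0 by (pose proof (fscal 0 vzero M0) as HH; rewrite vscal0 in HH; lra). rewrite F0. ring.
Qed.

Lemma ext_step_c M f : good M f -> forall y1, D y1 -> ~ M y1 ->
  exists M' f', good M' f' /\ (forall x, M x -> M' x) /\ (forall x, M x -> f' x = f x) /\ M' y1.
Proof.
intros Hg y1 Dy1 Hn.
pose proof Hg as Hg'. destruct Hg' as [M0 [Madd [Mscal [MD [fadd [fscal fG]]]]]].
set (S := fun r => exists d, M d /\ r = G (vadd d y1) - f d).
assert (Hb : forall d d', M d -> M d' -> G (vadd d y1) - f d <= f d' - G (vadd d' (vopp y1))).
{ intros d d' Hd Hd'. pose proof (Gsup (vadd d y1) (vadd d' (vopp y1))) as H.
  assert (Dm: D (vopp y1)) by (rewrite vopp_scal; apply Dscal; auto).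
  replace (vadd (vadd d y1) (vadd d' (vopp y1))) with (vadd d d') in H.
  pose proof (fG _ (Madd _ _ Hd Hd')). rewrite fadd in H0; auto.
  assert (G (vadd d y1) + G (vadd d' (vopp y1)) <= G (vadd d d')) by (apply H; apply Dadd; auto).
  lra. rewrite vadd_swap, vaddN, vadd0. reflexivity. }
destruct (completeness S) as [c [Hc1 Hc2]].
- exists (f vzero - G (vadd vzero (vopp y1))). intros r [d [Hd ->]]. apply Hb; auto.
- exists (G (vadd vzero y1) - f vzero). exists vzero. split; auto.
- destruct (ext_step M f Hg y1 Dy1 Hn c) as [M' [f' [H1 [H2 [H3 [H4 _]]]]]].
  + intros d Hd. apply Hc1. exists d; auto.
  + intros d Hd. apply Hc2. intros r [d' [Hd' ->]]. apply Hb; auto.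
  + exists M', f'. auto.
Qed.

Variable x0 : V.
Hypothesis Dx0 : D x0.

Record PF := mkPF { pdom : V -> Prop; pfn : V -> R;
  pgood : good pdom pfn; px0 : pdom x0; pfx0 : pfn x0 = G x0 }.
Definition PFle (a b : PF) : Prop := (forall x, pdom a x -> pdom b x) /\ (forall x, pdom a x -> pfn b x = pfn a x).

Lemma base_ex : exists M f, good M f /\ M x0 /\ f x0 = G x0.
Proof.
assert (Hg0 : good (fun z => z = vzero) (fun _ => 0)).
{ repeat split; intros.
  - subst; apply vadd0.
  - subst; apply vscal_zero.
  - subst; auto.
  - ring.
  - ring.
  - subst. rewrite G0. lra. }
destruct (classic (x0 = vzero)) as [E|E].
- exists (fun z => z = vzero), (fun _ => 0). split; auto. split; auto. rewrite E, G0. reflexivity.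
- destruct (ext_step _ _ Hg0 x0 Dx0 E (G x0)) as [M [f [Hg [Hs [Hf [Hx Hfx]]]]]].
  + intros d Hd. subst d. rewrite vadd0l. lra.
  + intros d Hd. subst d. rewrite vadd0l. pose proof (Gsup x0 (vopp x0) Dx0 ltac:(rewrite vopp_scal; apply Dscal; auto)).
    rewrite vaddN, G0 in H. lra.
  + exists M, f. auto.
Qed.

Lemma HB_main : exists l : V -> R, (forall x y, D x -> D y -> l (vadd x y) = l x + l y) /\
  (forall t x, D x -> l (vscal t x) = t * l x) /\ (forall x, D x -> G x <= l x) /\ l x0 = G x0.
Proof.
destruct base_ex as [M [f [Hg [Hx Hf]]]].
set (t0 := mkPF M f Hg Hx Hf).
destruct (myZorn PF t0 PFle) as [m Hm].
- intros a. split; auto.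
- intros a b c [H1 H2] [H3 H4]. split; auto. intros x Hx'. rewrite H4, H2; auto.
- intros A HA. destruct (classic (exists a, A a)) as [[a0 Ha0]|Hne].
  2:{ exists t0. intros s Hs. exfalso. apply Hne. exists s; auto. }
  set (udom := fun x => exists a, A a /\ pdom a x).
  set (ufn := fun x => pfn (epsilon (inhabits t0) (fun a => A a /\ pdom a x)) x).
  assert (Key : forall a x, A a -> pdom a x -> ufn x = pfn a x).
  { intros a x Ha Hxa. unfold ufn.
    pose proof (epsilon_spec (inhabits t0) (fun a => A a /\ pdom a x) (ex_intro _ a (conj Ha Hxa))) as [H1 H2].
    set (e := epsilon _ _) in *. destruct (HA a e Ha H1) as [[Q1 Q2]|[Q1 Q2]].
    - apply Q2; auto.
    - symmetry. apply Q2; auto. }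
  assert (Two : forall x y, udom x -> udom y -> exists c, A c /\ pdom c x /\ pdom c y).
  { intros x y [a [Ha Hxa]] [b [Hb Hyb]]. destruct (HA a b Ha Hb) as [[Q1 _]|[Q1 _]].
    - exists b. auto.
    - exists a. auto. }
  assert (Hgood : good udom ufn).
  { repeat split.
    - exists a0. split; auto. apply (pgood a0).
    - intros x y Hx1 Hy1. destruct (Two x y Hx1 Hy1) as [c [Hc [Q1 Q2]]]. exists c. split; auto. apply (pgood c); auto.
    - intros t x [a [Ha Hxa]]. exists a. split; auto. apply (pgood a); auto.
    - intros x [a [Ha Hxa]]. apply (pgood a); auto.
    - intros x y Hx1 Hy1. destruct (Two x y Hx1 Hy1) as [c [Hc [Q1 Q2]]].
      rewrite !(Key c); auto. apply (pgood c); auto. apply (pgood c); auto.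
    - intros t x [a [Ha Hxa]]. rewrite !(Key a); auto. apply (pgood a); auto. apply (pgood a); auto.
    - intros x [a [Ha Hxa]]. rewrite (Key a); auto. apply (pgood a); auto. }
  assert (Hux : udom x0) by (exists a0; split; auto; apply px0).
  assert (Hfx : ufn x0 = G x0) by (rewrite (Key a0); auto; [apply pfx0 | apply px0]).
  exists (mkPF udom ufn Hgood Hux Hfx). intros s Hs. split; simpl.
  + intros x Hxs. exists s; auto.
  + intros x Hxs. apply Key; auto.
- assert (Hall : forall y, D y -> pdom m y).
  { intros y Dy. apply NNPP. intros Hn.
    destruct (ext_step_c (pdom m) (pfn m) (pgood m) y Dy Hn) as [M' [f' [Hg' [Hs [Hfs Hy]]]]].
    assert (Hx' : M' x0) by (apply Hs; apply px0).
    assert (Hf' : f' x0 = G x0) by (rewrite Hfs; [apply pfx0 | apply px0]).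
    destruct (Hm (mkPF M' f' Hg' Hx' Hf')) as [Q1 _].
    - split; simpl; auto.
    - apply Hn. apply Q1. exact Hy. }
  exists (pfn m). destruct (pgood m) as [_ [_ [_ [_ [Fa [Fs FG]]]]]].
  split; [|split; [|split]].
  + intros. apply Fa; auto.
  + intros. apply Fs; auto.
  + intros. apply FG; auto.
  + apply pfx0.
Qed.
End HB.

Section Main.
Variable X : nat -> FLat.
Variable p : forall n, X (S n) -> X n.
Hypothesis p_lin : forall n, linear_map (p n).
Hypothesis p_pos : forall n, positive_map (p n).
Hypothesis p_reg : regular_lim X p.
Hypothesis p_red : reduced_lim X p.
Variable X0 : Prod X -> Prop.
Hypothesis X0_sub : subspace X p X0.
Variable q1 : X 0%nat -> R.
Hypothesis q1_lin : (forall x y, q1 (vadd x y) = q1 x + q1 y) /\ (forall t x, q1 (vscal t x) = t * q1 x).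
Hypothesis q1_pos : forall x, vle vzero x -> 0 <= q1 x.
Variable H : Prod X -> Prop.
Hypothesis H_cone : convex_cone X p H.
Hypothesis H_closed : seq_closed X p H.
Hypothesis H_neg : exists h, H h /\ ple X h (pzero X).

Definition q (x : Prod X) : R := q1 (x 0%nat).

Lemma pscalA a b x : pscal X a (pscal X b x) = pscal X (a * b) x.
Proof. apply (vscalA (PL X)). Qed.
Lemma pscal1 x : pscal X 1 x = x.
Proof. apply (vscal1 (PL X)). Qed.
Lemma pscal_inv t x : t <> 0 -> pscal X (/t) (pscal X t x) = x.
Proof. intros Ht. rewrite pscalA. replace (/t * t) with 1 by (field; auto). apply pscal1. Qed.

Lemma pscal_inv' t x : t <> 0 -> pscal X t (pscal X (/t) x) = x.
Proof. intros Ht. rewrite pscalA. replace (t * /t) with 1 by (field; auto). apply pscal1. Qed.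

Lemma q_add x y : q (padd X x y) = q x + q y.
Proof. apply (proj1 q1_lin). Qed.
Lemma q_scal t x : q (pscal X t x) = t * q x.
Proof. apply (proj2 q1_lin). Qed.
Lemma q1_mono a b : vle a b -> q1 a <= q1 b.
Proof. intros Hab. apply vle_sub0 in Hab. apply q1_pos in Hab. unfold vsub in Hab.
  rewrite (proj1 q1_lin), vopp_scal, (proj2 q1_lin) in Hab. lra. Qed.
Lemma q_zero : q (pzero X) = 0.
Proof. unfold q, pzero. pose proof (proj2 q1_lin 0 vzero). rewrite vscal0 in H0. lra. Qed.

Lemma Hlim h : H h -> in_lim X p h.
Proof. apply (proj1 H_cone). Qed.
Lemma Hscal t h : 0 < t -> H h -> H (pscal X t h).
Proof. apply (proj1 (proj2 H_cone)). Qed.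
Lemma Hadd a b : H a -> H b -> H (padd X a b).
Proof.
intros Ha Hb. pose proof (proj2 (proj2 H_cone) (/2) a b ltac:(lra) Ha Hb) as Hc.
apply (Hscal 2) in Hc; [|lra].
replace (padd X a b) with (pscal X 2 (padd X (pscal X (/ 2) a) (pscal X (1 - / 2) b))); auto.
change (@vscal (PL X) 2 (@vadd (PL X) (@vscal (PL X) (/2) a) (@vscal (PL X) (1 - /2) b)) = @vadd (PL X) a b).
rewrite vscalDr, !vscalA. replace (2 * /2) with 1 by field. replace (2 * (1 - /2)) with 1 by field. rewrite !vscal1. reflexivity.
Qed.

Lemma H0 : H (pzero X).
Proof.
destruct H_neg as [h0 [Hh0 _]].
apply (H_closed (fun k => pscal X (/ (INR k + 1)) h0)).
- intros k. apply Hscal; auto. apply Rinv_0_lt_compat. pose proof (pos_INR k). lra.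
- apply lim_zero; auto.
- intros n j eps He. unfold pscal, pzero. destruct (archimed (sn j (h0 n) / eps)) as [Ha _].
  destruct (INR_unbounded (sn j (h0 n) / eps)) as [N HN].
  exists N. intros k Hk. rewrite vsub0, sn_homog. rewrite Rabs_pos_eq.
  2:{ left. apply Rinv_0_lt_compat. pose proof (pos_INR k). lra. }
  apply le_INR in Hk. pose proof (sn_nonneg j (h0 n)) as Hs. pose proof (pos_INR k) as Hk0.
  assert (Hlt: sn j (h0 n) < eps * (INR k + 1)).
  { apply Rmult_lt_reg_r with (/eps). apply Rinv_0_lt_compat; auto.
    replace (eps * (INR k + 1) * / eps) with (INR k + 1) by (field; lra). unfold Rdiv in HN. lra. }
  apply Rmult_lt_reg_l with (INR k + 1). lra.
  replace ((INR k + 1) * (/ (INR k + 1) * sn j (h0 n))) with (sn j (h0 n)) by (field; lra). lra.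
Qed.

Definition SF (C : Prod X -> Prod X -> Prop) (y : Prod X) : ER :=
  Rsup (fun r => exists h, H h /\ C h y /\ r = q h).

Lemma spf_SF x : spf X H q x = SF (ple X) x.
Proof. unfold spf, SF, Rsup. f_equal. apply functional_extensionality. intros e.
  apply propositional_extensionality. split.
  - intros [h [Hh [Hle ->]]]. exists (q h). split; auto. exists h; auto.
  - intros [a [[h [Hh [Hle ->]]] ->]]. exists h; auto. Qed.

Section SFgen.
Variable C : Prod X -> Prod X -> Prop.
Hypothesis Cadd : forall h h' y y', C h y -> C h' y' -> C (padd X h h') (padd X y y').
Hypothesis Cscal : forall t h y, 0 < t -> C h y -> C (pscal X t h) (pscal X t y).
Hypothesis Cq : forall h y, in_lim X p y -> H h -> C h y -> q h <= q y.

Lemma SF_notP y : in_lim X p y -> SF C y <> PInf.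
Proof. intros Hy. apply (Rsup_notP _ (q y)). intros a [h [Hh [Hc ->]]]. apply Cq; auto. Qed.
Lemma SF_add y z : in_lim X p y -> in_lim X p z -> Ele (Eadd (SF C y) (SF C z)) (SF C (padd X y z)).
Proof. intros Hy Hz. apply (Rsup_add _ _ _ (q y) (q z)).
  - intros a [h [Hh [Hc ->]]]. apply Cq; auto.
  - intros a [h [Hh [Hc ->]]]. apply Cq; auto.
  - intros a b [h [Hh [Hc ->]]] [h' [Hh' [Hc' ->]]]. exists (q (padd X h h')). split.
    exists (padd X h h'). split. apply Hadd; auto. split; auto. rewrite q_add. lra. Qed.
Lemma SF_scal t y : 0 < t -> SF C (pscal X t y) = Escal t (SF C y).
Proof. intros Ht. apply Rsup_scal; auto.
  - intros b [h [Hh [Hc ->]]]. exists (q (pscal X (/t) h)). split.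
    exists (pscal X (/t) h). split. apply Hscal; auto. apply Rinv_0_lt_compat; auto. split; auto.
    rewrite <- (pscal_inv t y) by lra. apply Cscal; auto. apply Rinv_0_lt_compat; auto.
    rewrite q_scal. right. field. lra.
  - intros a [h [Hh [Hc ->]]]. exists (q (pscal X t h)). split.
    exists (pscal X t h). split. apply Hscal; auto. split; auto.
    rewrite q_scal. right. field. lra. Qed.
End SFgen.

Lemma ple_add h h' y y' : ple X h y -> ple X h' y' -> ple X (padd X h h') (padd X y y').
Proof. intros H1 H2 n. apply vle_add2; auto. Qed.
Lemma ple_scal t h y : 0 < t -> ple X h y -> ple X (pscal X t h) (pscal X t y).
Proof. intros Ht H1 n. apply vle_scal; auto. lra. Qed.
Lemma ple_q h y : in_lim X p y -> H h -> ple X h y -> q h <= q y.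
Proof. intros _ _ H1. apply q1_mono. apply H1. Qed.

Definition Cn (n : nat) (h y : Prod X) : Prop := vle (h n) (y n).
Lemma Cn_add n h h' y y' : Cn n h y -> Cn n h' y' -> Cn n (padd X h h') (padd X y y').
Proof. intros H1 H2. apply vle_add2; auto. Qed.
Lemma Cn_scal n t h y : 0 < t -> Cn n h y -> Cn n (pscal X t h) (pscal X t y).
Proof. intros Ht H1. apply vle_scal; auto. lra. Qed.
Lemma Cn_q n h y : in_lim X p y -> H h -> Cn n h y -> q h <= q y.
Proof. intros Hy Hh H1. apply q1_mono. apply (lim_down' X p p_lin p_pos h y 0 n); auto. apply Hlim; auto. lia. Qed.

Lemma part1 : superlinear_pos X p (spf X H q).
Proof.
split; [|split; [|split; [|split]]].
- intros x Hx. rewrite spf_SF. apply SF_notP; auto. exact ple_q.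
- intros x y Hx Hy. rewrite !spf_SF. apply SF_add; auto. exact ple_add. exact ple_q.
- intros t x Ht Hx. rewrite !spf_SF. apply SF_scal; auto. exact ple_scal.
- rewrite spf_SF. destruct (Rsup_fin (fun r => exists h, H h /\ ple X h (pzero X) /\ r = q h) 0) as [s [Hs _]].
  + exists (q (pzero X)). exists (pzero X). split. apply H0. split; auto. intro n; apply vle_refl.
  + intros a [h [Hh [Hc ->]]]. rewrite <- q_zero. apply ple_q; auto. apply lim_zero; auto.
  + exists s. exact Hs.
- intros x Hx Hpos. rewrite spf_SF. rewrite <- q_zero. apply Rsup_ub. exists (pzero X). split. apply H0. split; auto.
Qed.

Hypothesis hyp_iii : forall B : Prod X -> Prop,
      (forall b, B b -> H b) -> at_most_countable X B ->
      (exists u, in_lim X p u /\ forall b, B b -> ple X b u) ->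
      (exists c, forall b, B b -> c <= q1 (b 0%nat)) ->
      exists nq, forall n, (nq <= n)%nat -> seq_precompact (proj X n B).

Fixpoint Ufold (x : Prod X) (g : nat -> Prod X) (m : nat) : Prod X :=
  match m with O => pjoin X x (g 0%nat) | S m' => pjoin X (Ufold x g m') (g (S m')) end.

Lemma compact_C x t : in_lim X p x -> (forall n, exists h, H h /\ t <= q h /\ vle (h n) (x n)) ->
  exists h, H h /\ ple X h x /\ t <= q h.
Proof.
intros Hx Hn.
set (g := fun n => proj1_sig (constructive_indefinite_description _ (Hn n))).
assert (Hg: forall n, H (g n) /\ t <= q (g n) /\ vle (g n n) (x n)) by (intro n; exact (proj2_sig (constructive_indefinite_description _ (Hn n)))).
clearbody g.
assert (Hgk: forall n k, (k <= n)%nat -> vle (g n k) (x k)).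
{ intros n k Hk. apply (lim_down' X p p_lin p_pos (g n) x k n); auto. apply Hlim, Hg. apply Hg. }
set (U := Ufold x g).
assert (HUl : forall m, in_lim X p (U m)).
{ induction m; simpl. apply lim_join; auto. apply Hlim, Hg. apply lim_join; auto. apply Hlim, Hg. }
assert (HUx : forall m, ple X x (U m)).
{ induction m; intro k; simpl; unfold pjoin. apply vjoin_l. eapply vle_trans. apply IHm. apply vjoin_l. }
assert (HUg : forall d n, ple X (g n) (U (n + d)%nat)).
{ induction d; intros n k.
  - rewrite Nat.add_0_r. destruct n; simpl; unfold pjoin; apply vjoin_r.
  - replace (n + S d)%nat with (S (n + d)) by lia. simpl. unfold pjoin. eapply vle_trans. apply IHd. apply vjoin_l. }
set (u := fun k => U k k).
assert (Hul : in_lim X p u).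
{ intros k. unfold u. rewrite <- (HUl (S k) k). simpl. unfold pjoin. symmetry. apply vjoin_le_eq'.
  eapply vle_trans. apply Hgk. lia. apply HUx. }
assert (Hub : forall n k, vle (g n k) (u k)).
{ intros n k. unfold u. destruct (Nat.le_gt_cases n k).
  - pose proof (HUg (k - n)%nat n k) as HH. replace (n + (k - n))%nat with k in HH by lia. exact HH.
  - eapply vle_trans. apply Hgk. lia. apply HUx. }
set (B := fun b => exists n, b = g n).
destruct (hyp_iii B) as [nq Hnq].
- intros b [n ->]. apply Hg.
- exists g. intros b [n ->]. exists n; auto.
- exists u. split; auto. intros b [n ->] k. apply Hub.
- exists t. intros b [n ->]. apply Hg.
- assert (Hpc : forall m (s : nat -> nat), exists phi, (forall k, (phi k < phi (S k))%nat) /\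
     exists L, fconv (fun k => g (s (phi k)) (nq + m)%nat) L).
  { intros m s. destruct (Hnq (nq + m)%nat ltac:(lia) (fun k => g (s k) (nq + m)%nat)) as [phi [L [H1 H2]]].
    - intros k. exists (g (s k)). split; auto. exists (s k); auto.
    - exists phi. split; auto. exists L. exact H2. }
  set (tau := fun (s : nat -> nat) m => epsilon (inhabits (fun k : nat => k))
      (fun phi => (forall k, (phi k < phi (S k))%nat) /\ exists L, fconv (fun k => g (s (phi k)) (nq + m)%nat) L)).
  assert (Htau : forall s m, (forall k, (tau s m k < tau s m (S k))%nat) /\
     exists L, fconv (fun k => g (s (tau s m k)) (nq + m)%nat) L).
  { intros s m. unfold tau. apply epsilon_spec. apply Hpc. }
  clearbody tau.
  set (phi := fun j => sigf tau j j).
  assert (Hsub : forall d m k, exists i, (k <= i)%nat /\ sigf tau (m + d) k = sigf tau m i).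
  { apply sigf_sub. intros. apply Htau. }
  assert (Hphi : forall j, (j <= phi j)%nat).
  { intros j. unfold phi. destruct (Hsub j 0%nat j) as [i [Hi Ei]]. simpl in Ei. rewrite Ei. exact Hi. }
  assert (Hlev : forall m, exists L, fconv (fun j => g (phi j) (nq + m)%nat) L).
  { intros m. destruct (Htau (sigf tau m) m) as [_ [L HL]]. exists L.
    apply (fconv_tail _ (fun k => g (sigf tau m (tau (sigf tau m) m k)) (nq + m)%nat) _ L (S m)); auto.
    intros j Hj. destruct (Hsub (j - S m)%nat (S m) j) as [i [Hi Ei]]. exists i. split; auto.
    unfold phi. replace (S m + (j - S m))%nat with j in Ei by lia. rewrite Ei. reflexivity. }
  assert (Hdown : forall n m, (n <= m)%nat -> (exists L, fconv (fun j => g (phi j) m) L) -> exists L, fconv (fun j => g (phi j) n) L).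
  { intros n m Hle. induction Hle; intros HL; auto.
    apply IHHle. destruct HL as [L' HL'].
    exists (p m L'). replace (fun j => g (phi j) m) with (fun j => p m (g (phi j) (S m))).
    apply cont_op_fconv; auto. apply functional_extensionality. intros j. symmetry. apply (Hlim _ (proj1 (Hg (phi j)))). }
  assert (Hall : forall n, exists L, fconv (fun j => g (phi j) n) L).
  { intros n. apply (Hdown n (nq + n)%nat). lia. apply Hlev. }
  set (h := fun n => epsilon (inhabits (@vzero (X n))) (fun L : X n => fconv (fun j => g (phi j) n) L)).
  assert (Hh : forall n, fconv (fun j => g (phi j) n) (h n)) by (intro n; unfold h; apply epsilon_spec; apply Hall).
  clearbody h.
  assert (Hhl : in_lim X p h).
  { intros n. apply (fconv_unique _ (fun j => g (phi j) n)). apply Hh.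
    replace (fun j => g (phi j) n) with (fun j => p n (g (phi j) (S n))).
    apply cont_op_fconv; auto. apply functional_extensionality. intros j. symmetry. apply (Hlim _ (proj1 (Hg (phi j)))). }
  exists h. split; [|split].
  + apply (H_closed (fun j => g (phi j))); auto. intros k. apply Hg.
  + intros k. apply (fconv_le _ (fun j => g (phi j) k)). apply Hh. exists k. intros j Hj. apply Hgk. pose proof (Hphi j). lia.
  + unfold q. apply (cont_fun_ge (X 0%nat) q1 (proj1 q1_lin) (proj2 q1_lin) q1_pos (fun j => g (phi j) 0%nat)). apply Hh.
    intros k. apply Hg.
Qed.

Hypothesis hyp_i_ii : forall n,
      minorizing X n H X0 \/
      usc_on (proj X n X0) (sup_proj X p H (fun x => q1 (x 0%nat)) n).

Definition Lprops (l : Prod X -> R) : Prop :=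
      (forall y z, X0 y -> X0 z -> l (padd X y z) = l y + l z) /\
      (forall t y, X0 y -> l (pscal X t y) = t * l y) /\
      (forall y, X0 y -> ple X (pzero X) y -> 0 <= l y) /\
      (forall h x', H h -> X0 x' -> ple X h x' -> q1 (h 0%nat) <= l x').

Lemma X0lim y : X0 y -> in_lim X p y.
Proof. apply (proj1 X0_sub). Qed.
Lemma X0zero : X0 (pzero X).
Proof. apply (proj1 (proj2 X0_sub)). Qed.
Lemma X0add y z : X0 y -> X0 z -> X0 (padd X y z).
Proof. apply (proj1 (proj2 (proj2 X0_sub))). Qed.
Lemma X0scal t y : X0 y -> X0 (pscal X t y).
Proof. apply (proj2 (proj2 (proj2 X0_sub))). Qed.

Lemma build n (G : Prod X -> R) x : X0 x ->
  (forall y z, X0 y -> X0 z -> G y + G z <= G (padd X y z)) ->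
  (forall t y, 0 < t -> X0 y -> G (pscal X t y) = t * G y) ->
  (forall y h, X0 y -> H h -> vle (h n) (y n) -> q h <= G y) ->
  exists l, Lprops l /\ l x = G x.
Proof.
intros Hx Gs Gh Gb.
destruct (HB_main (PL X) X0 X0zero X0add X0scal G Gs Gh x Hx) as [l [L1 [L2 [L3 L4]]]].
exists l. split; auto. split; [|split; [|split]].
- exact L1.
- exact L2.
- intros y Hy Hpos. eapply Rle_trans; [|apply L3; auto]. rewrite <- q_zero. apply Gb; [exact Hy | apply H0 | apply Hpos].
- intros h x' Hh Hx' Hle. eapply Rle_trans; [|apply L3; auto]. apply Gb; auto.
Qed.

Definition ER2R (e : ER) : R := match e with Fin s => s | _ => 0 end.

Lemma key_n x t : X0 x -> (forall n, exists h, H h /\ t <= q h /\ vle (h n) (x n)) -> False \/ exists h, H h /\ ple X h x /\ t <= q h.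
Proof. intros Hx Hn. right. apply compact_C; auto. apply X0lim; auto. Qed.

Lemma key x r : X0 x -> Elt (spf X H q x) (Fin r) -> exists l, Lprops l /\ l x <= r.
Proof.
intros Hx Hlt. rewrite spf_SF in Hlt. destruct (Rsup_lt _ _ Hlt) as [t0 [Ht0 Hall]].
set (t := (t0 + r) / 2).
assert (Hn : exists n, forall h, H h -> vle (h n) (x n) -> q h < t).
{ apply NNPP. intros Hne.
  assert (Hc : forall n, exists h, H h /\ t <= q h /\ vle (h n) (x n)).
  { intros n. apply NNPP. intros Hn2. apply Hne. exists n. intros h Hh Hle.
    apply Rnot_le_lt. intros Hq. apply Hn2. exists h. auto. }
  destruct (compact_C x t (X0lim x Hx) Hc) as [h [Hh [Hle Hq]]].
  assert (q h <= t0) by (apply Hall; exists h; auto). unfold t in Hq. lra. }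
destruct Hn as [n Hn].
assert (Hxl : in_lim X p x) by (apply X0lim; auto).
destruct (hyp_i_ii n) as [Hmin|Husc].
-
  set (G := fun y => ER2R (SF (Cn n) y)).
  assert (HG : forall y, X0 y -> SF (Cn n) y = Fin (G y)).
  { intros y Hy. destruct (Rsup_fin (fun r => exists h, H h /\ Cn n h y /\ r = q h) (q y)) as [s [Hs _]].
    - destruct (Hmin (y n)) as [h' [[hh [Hhh Ehh]] Hle]]. exists y; auto.
      exists (q hh). exists hh. split; auto. split; auto. unfold Cn. rewrite Ehh. exact Hle.
    - intros a [h [Hh [Hc ->]]]. apply (Cn_q n); auto. apply X0lim; auto.
    - unfold G, SF. rewrite Hs. reflexivity. }
  destruct (build n G x Hx) as [l [Hl Hlx]].
  + intros y z Hy Hz. pose proof (SF_add (Cn n) (Cn_add n) (Cn_q n) y z (X0lim y Hy) (X0lim z Hz)) as E.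
    rewrite (HG y), (HG z), (HG (padd X y z)) in E; auto. apply X0add; auto.
  + intros t1 y Ht1 Hy. pose proof (SF_scal (Cn n) (Cn_scal n) t1 y Ht1) as E.
    rewrite (HG y), (HG (pscal X t1 y)) in E; auto. simpl in E. injection E. auto. apply X0scal; auto.
  + intros y h Hy Hh Hle. pose proof (Rsup_ub (fun r => exists h, H h /\ Cn n h y /\ r = q h) (q h)) as E.
    fold (SF (Cn n) y) in E. rewrite HG in E; auto. apply E. exists h. auto.
  + exists l. split; auto. rewrite Hlx.
    assert (Ele (SF (Cn n) x) (Fin t)). { apply Rsup_le. intros a [h [Hh [Hc ->]]]. left. apply Hn; auto. }
    rewrite HG in H1; auto. simpl in H1. unfold t in H1. lra.
-
  set (fn := sup_proj X p H q n).
  assert (Fa : forall z h, in_lim X p z -> H h -> vle (h n) (z n) -> Ele (Fin (q h)) (fn (z n))).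
  { intros z h Hz Hh Hle. destruct (lift_above X p p_lin p_reg p_red n h (z n) (Hlim h Hh) Hle) as [x' [Hx' [Ex' Hhx']]].
    apply Ele_trans with (spf X H q x'). rewrite spf_SF. apply Rsup_ub. exists h. auto.
    apply Esup_ub. exists x'. auto. }
  assert (Fb : Ele (fn (x n)) (Fin t)).
  { apply Esup_lub. intros a [x' [Hx' [Ex' ->]]]. rewrite spf_SF. apply Rsup_le.
    intros a [h [Hh [Hc ->]]]. left. apply Hn; auto. rewrite <- Ex'. apply Hc. }
  set (t' := (t + r) / 2).
  assert (Hlt' : Elt (fn (x n)) (Fin t')).
  { split. apply Ele_trans with (Fin t); auto. simpl. unfold t', t; lra.
    intros E. rewrite E in Fb. simpl in Fb. unfold t', t in Fb. lra. }
  destruct (Husc (x n) (ex_intro _ x (conj Hx eq_refl)) t' Hlt') as [j [eps [Heps Hnb]]].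
  set (T := fun w : X n => q1 (Pd X p n w)).
  assert (Tadd : forall a b, T (vadd a b) = T a + T b).
  { intros a b. unfold T. rewrite Pd_add; auto. apply q1_lin. }
  assert (Tscal : forall t1 a, T (vscal t1 a) = t1 * T a).
  { intros t1 a. unfold T. rewrite Pd_scal; auto. apply q1_lin. }
  assert (Tmono : forall a b, vle a b -> T a <= T b).
  { intros a b Hab. apply q1_mono. apply Pd_mono; auto. }
  assert (Tpos : forall a, vle vzero a -> 0 <= T a).
  { intros a Ha. pose proof (Tmono _ _ Ha). pose proof (Tscal 0 vzero). rewrite vscal0 in H2. lra. }
  assert (qT : forall h, in_lim X p h -> q h = T (h n)).
  { intros h Hh. unfold T, q. rewrite Pd_lim; auto. }
  destruct (auto_cont_fun (X n) T Tadd Tscal Tpos) as [i [C [HC HT]]].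
  set (J := max i j).
  set (rh := rho (X n) J).
  assert (rh0 : forall w, 0 <= rh w) by (intro; apply rho_nonneg).
  assert (rhsym : forall a b, rh (vsub a b) = rh (vsub b a)) by (intros; unfold rh; apply rho_sub_sym).
  set (M := C + Rabs (C * rh (x n) - t') / eps + 1).
  assert (HM : C + 1 <= M) by (unfold M; pose proof (Rabs_pos (C * rh (x n) - t')); assert (0 <= Rabs (C * rh (x n) - t') / eps) by (unfold Rdiv; apply Rmult_le_pos; [lra | left; apply Rinv_0_lt_compat; lra]); lra).
  assert (Tb : forall z, T z <= C * rh z).
  { intros z. eapply Rle_trans. apply Rle_abs. eapply Rle_trans. apply HT. apply Rmult_le_compat_l; auto. apply rho_mono. unfold J; lia. }
  assert (UB : forall y h z, in_lim X p y -> H h -> X0 z -> vle (h n) (z n) ->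
     q h <= C * rh (y n) + C * rh (vsub (z n) (y n))).
  { intros y h z Hy Hh Hz Hle. rewrite qT by (apply Hlim; auto).
    eapply Rle_trans. apply Tmono. exact Hle. eapply Rle_trans. apply Tb.
    rewrite <- Rmult_plus_distr_l. apply Rmult_le_compat_l; auto.
    rewrite <- (vsub_add (z n) (y n)) at 1. rewrite vaddC. apply rho_tri. }
  set (Bs := fun y r => exists h z, H h /\ X0 z /\ vle (h n) (z n) /\ r = q h - M * rh (vsub (y n) (z n))).
  set (G := fun y => ER2R (Rsup (Bs y))).
  assert (HG : forall y, X0 y -> Rsup (Bs y) = Fin (G y)).
  { intros y Hy. destruct (Rsup_fin (Bs y) (C * rh (y n))) as [s [Hs _]].
    - exists (q (pzero X) - M * rh (vsub (y n) (pzero X n))). exists (pzero X), (pzero X).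
      split. apply H0. split. apply X0zero. split; auto. apply vle_refl.
    - intros a [h [z [Hh [Hz [Hle ->]]]]]. pose proof (UB y h z (X0lim y Hy) Hh Hz Hle).
      rewrite rhsym in H1. pose proof (rh0 (vsub (y n) (z n))). fold rh in H1. nra.
    - unfold G. rewrite Hs. reflexivity. }
  assert (Escl : forall t1 h z y, 0 < t1 -> q (pscal X t1 h) - M * rh (vsub (pscal X t1 y n) (pscal X t1 z n)) =
     t1 * (q h - M * rh (vsub (y n) (z n)))).
  { intros t1 h z y Ht1. rewrite q_scal. unfold pscal. rewrite <- vscal_sub. unfold rh. rewrite rho_homog, Rabs_pos_eq by lra. ring. }
  destruct (build n G x Hx) as [l [Hl Hlx]].
  + intros y z Hy Hz. pose proof (Rsup_add (Bs y) (Bs z) (Bs (padd X y z)) (C * rh (y n)) (C * rh (z n))) as E.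
    rewrite (HG y), (HG z), (HG (padd X y z)) in E by (auto; apply X0add; auto). simpl in E. apply E.
    * intros a [h [z' [Hh [Hz' [Hle ->]]]]]. pose proof (UB y h z' (X0lim y Hy) Hh Hz' Hle).
      rewrite rhsym in H1. pose proof (rh0 (vsub (y n) (z' n))). fold rh in H1. nra.
    * intros a [h [z' [Hh [Hz' [Hle ->]]]]]. pose proof (UB z h z' (X0lim z Hz) Hh Hz' Hle).
      rewrite rhsym in H1. pose proof (rh0 (vsub (z n) (z' n))). fold rh in H1. nra.
    * intros a b [h [z1 [Hh [Hz1 [Hle1 ->]]]]] [h' [z2 [Hh' [Hz2 [Hle2 ->]]]]].
      exists (q (padd X h h') - M * rh (vsub (padd X y z n) (padd X z1 z2 n))). split.
      exists (padd X h h'), (padd X z1 z2). split. apply Hadd; auto. split. apply X0add; auto. split; auto. apply vle_add2; auto.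
      rewrite q_add. unfold padd. rewrite vsub_addsub. pose proof (rho_tri (X n) J (vsub (y n) (z1 n)) (vsub (z n) (z2 n))).
      fold rh in H1. assert (0 <= M) by lra. nra.
  + intros t1 y Ht1 Hy. assert (E : Rsup (Bs (pscal X t1 y)) = Escal t1 (Rsup (Bs y))).
    { apply Rsup_scal; auto.
      - intros b [h [z [Hh [Hz [Hle ->]]]]]. exists (q (pscal X (/t1) h) - M * rh (vsub (y n) (pscal X (/t1) z n))). split.
        exists (pscal X (/t1) h), (pscal X (/t1) z). split. apply Hscal; auto. apply Rinv_0_lt_compat; auto.
        split. apply X0scal; auto. split; auto. apply vle_scal; auto. left; apply Rinv_0_lt_compat; auto.
        rewrite <- Escl by auto. rewrite !pscal_inv' by lra. right; reflexivity.
      - intros a [h [z [Hh [Hz [Hle ->]]]]]. exists (q (pscal X t1 h) - M * rh (vsub (pscal X t1 y n) (pscal X t1 z n))). split.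
        exists (pscal X t1 h), (pscal X t1 z). split. apply Hscal; auto. split. apply X0scal; auto. split; auto.
        apply vle_scal; auto. lra.
        rewrite Escl by auto. right. field. lra. }
    rewrite (HG y), (HG (pscal X t1 y)) in E by (auto; apply X0scal; auto). simpl in E. injection E. auto.
  + intros y h Hy Hh Hle. pose proof (Rsup_ub (Bs y) (q h - M * rh (vsub (y n) (y n)))) as E.
    rewrite HG in E by auto. assert (rh (vsub (y n) (y n)) = 0).
    { rewrite vsub_self. unfold rh. rewrite <- (vscal0 (@vzero (X n))), rho_homog, Rabs_R0. ring. }
    rewrite H1 in E. replace (q h - M * 0) with (q h) in E by ring. apply E. exists h, y. split; auto. split; auto. split; auto. rewrite H1. ring.
  + exists l. split; auto. rewrite Hlx.
    assert (Ele (Rsup (Bs x)) (Fin t')).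
    { apply Rsup_le. intros a [h [z [Hh [Hz [Hle ->]]]]].
      destruct (classic (in_nbhd j eps (x n) (z n))) as [Hin|Hout].
      - pose proof (Hnb (z n) (ex_intro _ z (conj Hz eq_refl)) Hin) as Hz2.
        pose proof (Fa z h (X0lim z Hz) Hh Hle) as Hz3. fold fn in Hz2.
        assert (q h < t').
        { apply Elt_Fin. eapply Ele_Elt; eauto. }
        pose proof (rh0 (vsub (x n) (z n))). nra.
      - assert (Hr : eps <= rh (vsub (z n) (x n))).
        { apply Rnot_lt_le. intros Hr. apply Hout. intros i' Hi'. eapply Rle_lt_trans; [|exact Hr].
          apply rho_ge. unfold J; lia. }
        pose proof (UB x h z Hxl Hh Hz Hle). rewrite (rhsym (x n)). fold rh.
        pose proof (Rle_abs (C * rh (x n) - t')).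
        assert ((M - C) * eps >= C * rh (x n) - t').
        { unfold M. replace ((C + Rabs (C * rh (x n) - t') / eps + 1 - C) * eps) with (Rabs (C * rh (x n) - t') + eps) by (field; lra). lra. }
        nra. }
    rewrite HG in H1 by auto. simpl in H1. unfold t', t in H1. lra.
Qed.

Lemma part2 x : X0 x -> spf X H q x = Einf (fun a => exists l : Prod X -> R, Lprops l /\ a = Fin (l x)).
Proof.
intros Hx. apply Ele_antisym.
- apply Einf_glb. intros a [l [[L1 [L2 [L3 L4]]] ->]]. rewrite spf_SF. apply Rsup_le.
  intros b [h [Hh [Hle ->]]]. apply L4; auto.
- assert (Hk : forall r, Elt (spf X H q x) (Fin r) -> Ele (Einf (fun a => exists l : Prod X -> R, Lprops l /\ a = Fin (l x))) (Fin r)).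
  { intros r Hr. destruct (key x r Hx Hr) as [l [Hl Hlx]]. eapply Ele_trans. apply Einf_lb. exists l. split; eauto.
    simpl. exact Hlx. }
  pose proof ((proj1 part1) x (X0lim x Hx)) as NP.
  revert Hk. generalize (Einf (fun a => exists l : Prod X -> R, Lprops l /\ a = Fin (l x))). intros E Hk.
  destruct (spf X H q x) as [s| |].
  + destruct E as [e| |]; simpl; auto.
    * apply Rnot_lt_le. intros Hl. pose proof (Hk ((s + e)/2)) as K. simpl in K.
      assert (e <= (s + e) / 2). { apply K. split. simpl. lra. intro Q; injection Q; lra. } lra.
    * pose proof (Hk (s + 1)) as K. simpl in K. apply K. split. simpl. lra. intro Q; injection Q; lra.
  + exfalso. apply NP. reflexivity.
  + destruct E as [e| |]; simpl; auto.
    * pose proof (Hk (e - 1)) as K. simpl in K. assert (e <= e - 1). apply K. split; simpl; auto. discriminate. lra.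
    * apply (Hk 0). split; simpl; auto. discriminate.
Qed.
End Main.

Theorem mainTheorem11
  (X : nat -> FLat) (p : forall n, X (S n) -> X n)
  (p_lin : forall n, linear_map (p n))
  (p_pos : forall n, positive_map (p n))
  (p_reg : regular_lim X p)
  (p_red : reduced_lim X p)
  (X0 : Prod X -> Prop) (X0_sub : subspace X p X0)
  (q1 : X 0%nat -> R)
  (q1_lin : (forall x y, q1 (vadd x y) = q1 x + q1 y) /\
            (forall t x, q1 (vscal t x) = t * q1 x))
  (q1_pos : forall x, vle vzero x -> 0 <= q1 x)
  (H : Prod X -> Prop) (H_cone : convex_cone X p H)
  (H_closed : seq_closed X p H)
  (H_neg : exists h, H h /\ ple X h (pzero X))
  (hyp_i_ii : forall n,
      minorizing X n H X0 \/
      usc_on (proj X n X0) (sup_proj X p H (fun x => q1 (x 0%nat)) n))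
  (hyp_iii : forall B : Prod X -> Prop,
      (forall b, B b -> H b) -> at_most_countable X B ->
      (exists u, in_lim X p u /\ forall b, B b -> ple X b u) ->
      (exists c, forall b, B b -> c <= q1 (b 0%nat)) ->
      exists nq, forall n, (nq <= n)%nat -> seq_precompact (proj X n B)) :
  superlinear_pos X p (spf X H (fun x => q1 (x 0%nat))) /\
  forall x, X0 x ->
    spf X H (fun x => q1 (x 0%nat)) x =
    Einf (fun a => exists l : Prod X -> R,
      (forall y z, X0 y -> X0 z -> l (padd X y z) = l y + l z) /\
      (forall t y, X0 y -> l (pscal X t y) = t * l y) /\
      (forall y, X0 y -> ple X (pzero X) y -> 0 <= l y) /\
      (forall h x', H h -> X0 x' -> ple X h x' -> q1 (h 0%nat) <= l x') /\
      a = Fin (l x)).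
Proof.
split.
- pose proof (part1 X p) as K. unfold q in K. cbv beta in K. eapply K; eauto.
- intros x Hx. pose proof (part2 X p) as K. unfold q in K. cbv beta in K. erewrite K; eauto.
  f_equal. apply functional_extensionality. intro a. apply propositional_extensionality.
  unfold Lprops. split; intros [l Hl]; exists l; tauto.
Qed.
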